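(* Let $\Bbbk$ be an algebraically closed field of characteristic $2$, let $\mathfrak{u}(\mathfrak{m})$ be the algebra generated by $a,b,c$ with relations $ab+ba=c$, $ac+ca=a$, $bc+cb=b$, $a^4=b^4=0$, $c^2+c=0$, let $e_0=(1+ab+a^2b^2)(1+c)$, $e_1=(1+a^2b^2)c$, $e=e_0+e_1$ and $\mathfrak{u}(\mathfrak{m})^{\mathtt b}=e\,\mathfrak{u}(\mathfrak{m})\,e$. Let $Q$ be the quiver with vertices $0,1$, two arrows $\alpha_1,\alpha_2$ from $0$ to $1$ and two arrows $\beta_1,\beta_2$ from $1$ to $0$. Then: (i) there is a surjective algebra map $\varphi:\Bbbk Q\to\mathfrak{u}(\mathfrak{m})^{\mathtt b}$ with $\varphi(\varepsilon_i)=e_i$ ($i=0,1$), $\varphi(\alpha_1)=a^3e_1$, $\varphi(\alpha_2)=be_1$, $\varphi(\beta_1)=ae_0$, $\varphi(\beta_2)=b^3e_0$, whose kernel is the ideal $$I=\langle \alpha_1\beta_1,\ \alpha_2\beta_2,\ \beta_1\alpha_1,\ \beta_2\alpha_2,\ \alpha_1\beta_2+\alpha_2\beta_1,\ \beta_1\alpha_2+\beta_2\alpha_1\rangle,$$ so that $\mathfrak{u}(\mathfrak{m})^{\mathtt b}\simeq\Bbbk Q/I$; (ii) the algebra $\mathfrak{u}(\mathfrak{m})^{\mathtt b}$ is special biserial.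
   Context: $\Bbbk Q$ is the path algebra of $Q$, $\varepsilon_i$ the trivial path at vertex $i$, and the product of paths is concatenation with $pq$ meaning ''first $p$, then $q$'' (so $\varepsilon_{s(\alpha)}\alpha=\alpha=\alpha\varepsilon_{t(\alpha)}$). For a bound quiver $(Q,I)$ with $I$ admissible, $\Bbbk Q/I$ is special biserial if every vertex is the source of at most two arrows and the target of at most two arrows, and for arrows $\alpha\neq\beta$ and $\gamma$: if $s(\alpha)=s(\beta)=t(\gamma)$ then $\gamma\alpha\in I$ or $\gamma\beta\in I$; if $t(\alpha)=t(\beta)=s(\gamma)$ then $\alpha\gamma\in I$ or $\beta\gamma\in I$. *)

(* Defs.v *)
From HB Require Import structures.
From mathcomp Require Import all_boot all_order all_algebra.
From mathcomp.multinomials Require Import monalg.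
Set Implicit Arguments.
Unset Strict Implicit.
Unset Printing Implicit Defensive.
Import GRing.Theory.
Local Open Scope ring_scope.

Definition ideal_gen (R : nzRingType) (S : R -> Prop) (x : R) : Prop :=
  exists l : seq (R * R * R),
    (forall t, t \in l -> S t.1.2) /\ x = \sum_(t <- l) t.1.1 * t.1.2 * t.2.

(* The algebra u(m): the free (noncommutative) k-algebra k<a,b,c>      *)
(* (monoid algebra of the free monoid on 'I_3), taken modulo the       *)
(* two-sided ideal generated by the defining relations.  Elements of    *)
(* u(m) are represented by elements of the free algebra, and equality  *)
(* in u(m) is congruence modulo that ideal ([um_eq]).                   *)
Section Um.
Variable k : fieldType.

Definition freealg := {malg k[{fmonom 'I_3}]}.

Definition gen (i : 'I_3) : freealg := << fmu i >>.
Definition ga : freealg := gen (@Ordinal 3 0 isT).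
Definition gb : freealg := gen (@Ordinal 3 1 isT).
Definition gc : freealg := gen (@Ordinal 3 2 isT).

Definition um_rel (x : freealg) : Prop :=
  x = ga * gb + gb * ga - gc \/
  x = ga * gc + gc * ga - ga \/
  x = gb * gc + gc * gb - gb \/
  x = ga ^+ 4 \/
  x = gb ^+ 4 \/
  x = gc ^+ 2 + gc.

Definition um_eq (x y : freealg) : Prop := ideal_gen um_rel (x - y).

Definition ue0 : freealg := (1 + ga * gb + ga ^+ 2 * gb ^+ 2) * (1 + gc).
Definition ue1 : freealg := (1 + ga ^+ 2 * gb ^+ 2) * gc.
Definition ue : freealg := ue0 + ue1.
End Um.

Definition v0 : 'I_2 := @Ordinal 2 0 isT.
Definition v1 : 'I_2 := @Ordinal 2 1 isT.
Definition src (x : 'I_4) : 'I_2 := if (x < 2)%N then v0 else v1.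
Definition tgt (x : 'I_4) : 'I_2 := if (x < 2)%N then v1 else v0.
Definition alpha1 : 'I_4 := @Ordinal 4 0 isT.
Definition alpha2 : 'I_4 := @Ordinal 4 1 isT.
Definition beta1 : 'I_4 := @Ordinal 4 2 isT.
Definition beta2 : 'I_4 := @Ordinal 4 3 isT.

(* A path is a pair (v, s): the starting vertex v and the sequence s    *)
(* of arrows, in order of traversal; (v, [::]) is the trivial path e_v. *)
Definition qpath := ('I_2 * seq 'I_4)%type.
Definition valid_path (p : qpath) : bool :=
  match p.2 with
  | [::] => true
  | x :: s => (src x == p.1) && path (fun y z => tgt y == src z) x s
  end.
Definition path_end (p : qpath) : 'I_2 :=
  match p.2 with
  | [::] => p.1
  | x :: s => tgt (last x s)
  end.

(* P is (a copy of) the path algebra kQ, with pe p the basis element   *)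
(* attached to the path p: the paths form a k-basis of P and the       *)
(* product of two paths is their concatenation ("first p then q") if   *)
(* the end of p is the start of q, and 0 otherwise.                    *)
Definition is_path_algebra (k : fieldType) (P : algType k) (pe : qpath -> P)
  : Prop :=
  [/\ (forall p q, valid_path p -> valid_path q ->
         pe p * pe q = if path_end p == q.1 then pe (p.1, p.2 ++ q.2) else 0),
      (forall y : P, exists l : seq (k * qpath),
         (forall t, t \in l -> valid_path t.2) /\
         y = \sum_(t <- l) t.1 *: pe t.2) &
      (forall l : seq (k * qpath),
         uniq (map snd l) -> (forall t, t \in l -> valid_path t.2) ->
         \sum_(t <- l) t.1 *: pe t.2 = 0 -> forall t, t \in l -> t.1 = 0)].

Section PathAlg.
Variables (k : fieldType) (P : algType k) (pe : qpath -> P).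
Definition eps (v : 'I_2) : P := pe (v, [::]).
Definition arr (x : 'I_4) : P := pe (src x, [:: x]).

Definition I_rel (x : P) : Prop :=
  x = arr alpha1 * arr beta1 \/
  x = arr alpha2 * arr beta2 \/
  x = arr beta1 * arr alpha1 \/
  x = arr beta2 * arr alpha2 \/
  x = arr alpha1 * arr beta2 + arr alpha2 * arr beta1 \/
  x = arr beta1 * arr alpha2 + arr beta2 * arr alpha1.
Definition I_Q (x : P) : Prop := ideal_gen I_rel x.

Definition arrow_ideal_pow (m : nat) (x : P) : Prop :=
  ideal_gen (fun y => exists s : seq 'I_4, size s = m /\ y = \prod_(i <- s) arr i) x.

Definition admissible (I : P -> Prop) : Prop :=
  exists m, (2 <= m)%N /\ (forall x, arrow_ideal_pow m x -> I x) /\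
            (forall x, I x -> arrow_ideal_pow 2 x).

Definition special_biserial (I : P -> Prop) : Prop :=
  [/\ admissible I,
      (forall v, #|[set x : 'I_4 | src x == v]| <= 2)%N,
      (forall v, #|[set x : 'I_4 | tgt x == v]| <= 2)%N,
      (forall al be ga : 'I_4, al != be -> src al = src be -> src be = tgt ga ->
          I (arr ga * arr al) \/ I (arr ga * arr be)) &
      (forall al be ga : 'I_4, al != be -> tgt al = tgt be -> tgt be = src ga ->
          I (arr al * arr ga) \/ I (arr be * arr ga))].
End PathAlg.

(* Main.v *)
Require Import Defs.
From HB Require Import structures.
From mathcomp Require Import all_boot all_order all_algebra.
From mathcomp.multinomials Require Import monalg.
From mathcomp Require finmap.
Import GRing.Theory.

Module MP1.
Local Open Scope ring_scope.
Set Implicit Arguments.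
Unset Strict Implicit.
Unset Printing Implicit Defensive.

Section IdealGen.
Variable R : nzRingType.
Variable S : R -> Prop.

Lemma ig0 : ideal_gen S 0.
Proof. by exists [::]; split => //; rewrite big_nil. Qed.

Lemma igD x y : ideal_gen S x -> ideal_gen S y -> ideal_gen S (x + y).
Proof.
move=> [l1 [H1 ->]] [l2 [H2 ->]]; exists (l1 ++ l2); split; last by rewrite big_cat.
by move=> t; rewrite mem_cat => /orP[/H1|/H2].
Qed.

Lemma igMl u x : ideal_gen S x -> ideal_gen S (u * x).
Proof.
move=> [l [H ->]]; exists [seq (u * t.1.1, t.1.2, t.2) | t <- l]; split.
  by move=> t /mapP[t' /H Ht' ->].
by rewrite big_map mulr_sumr; apply: eq_bigr => t _; rewrite !mulrA.
Qed.

Lemma igMr x v : ideal_gen S x -> ideal_gen S (x * v).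
Proof.
move=> [l [H ->]]; exists [seq (t.1.1, t.1.2, t.2 * v) | t <- l]; split.
  by move=> t /mapP[t' /H Ht' ->].
by rewrite big_map mulr_suml; apply: eq_bigr => t _; rewrite !mulrA.
Qed.

Lemma igN x : ideal_gen S x -> ideal_gen S (- x).
Proof. by move=> H; rewrite -mulN1r; apply: igMl. Qed.

Lemma igB x y : ideal_gen S x -> ideal_gen S y -> ideal_gen S (x - y).
Proof. by move=> Hx Hy; apply: igD => //; apply: igN. Qed.

Lemma igS s : S s -> ideal_gen S s.
Proof.
by move=> Hs; exists [:: (1, s, 1)]; split; [move=> t; rewrite inE => /eqP -> | rewrite big_seq1 mul1r mulr1].
Qed.

Lemma ig_sum (I : Type) (r : seq I) (F : I -> R) :
  (forall i, ideal_gen S (F i)) -> ideal_gen S (\sum_(i <- r) F i).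
Proof.
move=> H; elim: r => [|i r IH]; first by rewrite big_nil; apply: ig0.
by rewrite big_cons; apply: igD.
Qed.

Lemma ig_eq x y : x = y -> ideal_gen S x -> ideal_gen S y.
Proof. by move=> ->. Qed.
End IdealGen.

Lemma igZ (K : fieldType) (A : lalgType K) (S : A -> Prop) (c : K) (x : A) :
  ideal_gen S x -> ideal_gen S (c *: x).
Proof. by move=> H; rewrite -mulr_algl; apply: igMl. Qed.

Section GenEq.
Variable R : nzRingType.
Variable S : R -> Prop.
Definition E (x y : R) := ideal_gen S (x - y).
Implicit Types x y z : R.

Lemma E_refl x : E x x.
Proof. by rewrite /E subrr; apply: ig0. Qed.

Lemma E_eq x y : x = y -> E x y.
Proof. by move=> ->; apply: E_refl. Qed.

Lemma E_sym x y : E x y -> E y x.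
Proof. by rewrite /E => H; rewrite -opprB; apply: igN. Qed.

Lemma E_trans y x z : E x y -> E y z -> E x z.
Proof.
rewrite /E => H1 H2; have -> : x - z = (x - y) + (y - z) by rewrite addrA subrK.
exact: igD.
Qed.

Lemma E_add x1 y1 x2 y2 : E x1 y1 -> E x2 y2 -> E (x1 + x2) (y1 + y2).
Proof.
rewrite /E => H1 H2; have -> : x1 + x2 - (y1 + y2) = (x1 - y1) + (x2 - y2).
  by rewrite opprD addrACA.
exact: igD.
Qed.

Lemma E_opp x y : E x y -> E (- x) (- y).
Proof. by rewrite /E => H; rewrite -opprD; apply: igN. Qed.

Lemma E_mul x1 y1 x2 y2 : E x1 y1 -> E x2 y2 -> E (x1 * x2) (y1 * y2).
Proof.
rewrite /E => H1 H2; have -> : x1 * x2 - y1 * y2 = (x1 - y1) * x2 + y1 * (x2 - y2).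
  by rewrite mulrBl mulrBr addrA subrK.
by apply: igD; [apply: igMr|apply: igMl].
Qed.

Lemma E_sum (I : Type) (r : seq I) (f g : I -> R) :
  (forall i, E (f i) (g i)) -> E (\sum_(i <- r) f i) (\sum_(i <- r) g i).
Proof.
move=> H; elim: r => [|i r IH]; first by rewrite !big_nil; apply: E_refl.
by rewrite !big_cons; apply: E_add.
Qed.

Lemma E_sum_in (I : eqType) (r : seq I) (f g : I -> R) :
  (forall i, i \in r -> E (f i) (g i)) -> E (\sum_(i <- r) f i) (\sum_(i <- r) g i).
Proof.
elim: r => [|i r IH] H; first by rewrite !big_nil; apply: E_refl.
rewrite !big_cons; apply: E_add; first by apply: H; rewrite inE eqxx.
by apply: IH => j Hj; apply: H; rewrite inE Hj orbT.
Qed.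

Lemma E_S0 x : S x -> E x 0.
Proof. by move=> H; rewrite /E subr0; apply: igS. Qed.

Lemma E_of_S x y r : S r -> x - y = r -> E x y.
Proof. by move=> Hr H; rewrite /E H; apply: igS. Qed.

Lemma E_ideal x : E x 0 <-> ideal_gen S x.
Proof. by rewrite /E subr0. Qed.
End GenEq.

Lemma E_scale (K : fieldType) (A : lalgType K) (S : A -> Prop) (c : K) (x y : A) :
  E S x y -> E S (c *: x) (c *: y).
Proof. by rewrite /E => H; rewrite -scalerBr; apply: igZ. Qed.

End MP1.
Import MP1.

Module MP2.
Local Open Scope ring_scope.
Set Implicit Arguments.
Unset Strict Implicit.
Unset Printing Implicit Defensive.

Definition wpoly := seq (seq nat).
Definition pmul (p q : wpoly) : wpoly := [seq u ++ v | u <- p, v <- q].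

Definition rules : seq (seq nat * wpoly) :=
  [:: ([:: 1; 0], [:: [:: 0; 1]; [:: 2]]);
      ([:: 2; 0], [:: [:: 0; 2]; [:: 0]]);
      ([:: 2; 1], [:: [:: 1; 2]; [:: 1]]);
      ([:: 2; 2], [:: [:: 2]]);
      ([:: 0; 0; 0; 0], [::]);
      ([:: 1; 1; 1; 1], [::])]%N.

Fixpoint find_rule (rs : seq (seq nat * wpoly)) (w : seq nat) : option wpoly :=
  match rs with
  | [::] => None
  | r :: rs' => if take (size r.1) w == r.1
                then Some [seq u ++ drop (size r.1) w | u <- r.2]
                else find_rule rs' w
  end.

Fixpoint rw (w : seq nat) : option wpoly :=
  match find_rule rules w with
  | Some q => Some q
  | None => match w with
            | [::] => None
            | x :: w' => omap (map (cons x)) (rw w')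
            end
  end.

Definition step (p : wpoly) : wpoly :=
  flatten [seq (if rw w is Some q then q else [:: w]) | w <- p].
Definition pcancel (p : wpoly) : wpoly := [seq w <- undup p | odd (count_mem w p)].
Fixpoint nf (n : nat) (p : wpoly) : wpoly :=
  match n with 0 => p | n'.+1 => nf n' (pcancel (step p)) end.
Definition zcheck (p : wpoly) : bool := nf 300 p == [::].

Section Interp.
Variables (R : nzRingType) (A B C : R).
Hypothesis char2R : (2%:R : R) = 0.

Definition relR (x : R) : Prop :=
  x = A * B + B * A - C \/
  x = A * C + C * A - A \/
  x = B * C + C * B - B \/
  x = A ^+ 4 \/
  x = B ^+ 4 \/
  x = C ^+ 2 + C.
Local Notation EE := (E relR).

Definition gl (n : nat) : R := match n with 0 => A | 1 => B | _ => C end.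
Definition iw (w : seq nat) : R := \prod_(l <- w) gl l.
Definition interp (p : wpoly) : R := \sum_(w <- p) iw w.

Lemma addxx (x : R) : x + x = 0.
Proof. by rewrite -mulr2n -mulr_natl char2R mul0r. Qed.

Lemma oppR (x : R) : - x = x.
Proof. by apply/eqP; rewrite eq_sym -subr_eq0 opprK addxx. Qed.

Lemma iw_cat u v : iw (u ++ v) = iw u * iw v.
Proof. by rewrite /iw big_cat. Qed.

Lemma iw_cons x u : iw (x :: u) = gl x * iw u.
Proof. by rewrite /iw big_cons. Qed.

Lemma iw_nil : iw [::] = 1.
Proof. by rewrite /iw big_nil. Qed.

Lemma interp_cat p q : interp (p ++ q) = interp p + interp q.
Proof. by rewrite /interp big_cat. Qed.

Lemma interp_pmul p q : interp (pmul p q) = interp p * interp q.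
Proof.
rewrite /interp /pmul big_allpairs_dep mulr_suml; apply: eq_bigr => u _.
by rewrite mulr_sumr; apply: eq_bigr => v _; rewrite iw_cat.
Qed.

Lemma interp_nil : interp [::] = 0.
Proof. by rewrite /interp big_nil. Qed.

Lemma interp_seq1 w : interp [:: w] = iw w.
Proof. by rewrite /interp big_seq1. Qed.

Lemma interp_cons w p : interp (w :: p) = iw w + interp p.
Proof. by rewrite /interp big_cons. Qed.

Lemma interp_map_cons x p : interp (map (cons x) p) = gl x * interp p.
Proof. by rewrite /interp big_map mulr_sumr; apply: eq_bigr => w _; rewrite iw_cons. Qed.

Lemma interp_map_catr p v : interp [seq u ++ v | u <- p] = interp p * iw v.
Proof. by rewrite /interp big_map mulr_suml; apply: eq_bigr => w _; rewrite iw_cat. Qed.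

Lemma iw2 x y : iw [:: x; y] = gl x * gl y.
Proof. by rewrite /iw !big_cons big_nil mulr1. Qed.
Lemma iw1 x : iw [:: x] = gl x.
Proof. by rewrite /iw !big_cons big_nil mulr1. Qed.
Lemma iw4 x : iw [:: x; x; x; x] = gl x ^+ 4.
Proof. by rewrite /iw !big_cons big_nil mulr1 !exprS expr0 mulr1. Qed.
Lemma interp2 u v : interp [:: u; v] = iw u + iw v.
Proof. by rewrite /interp !big_cons big_nil addr0. Qed.

Lemma rules_sound r : r \in rules -> EE (iw r.1) (interp r.2).
Proof.
rewrite /rules !inE => /or4P[|||/or3P[||]] /eqP ->.
- change (EE (iw [:: 1; 0]%N) (interp [:: [:: 0; 1]; [:: 2]]%N)).
  rewrite interp2 !iw2 iw1 /=.
  apply: (E_of_S (r := A * B + B * A - C)); first by left.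
  by rewrite !oppR addrA (addrC (B * A)).
- change (EE (iw [:: 2; 0]%N) (interp [:: [:: 0; 2]; [:: 0]]%N)).
  rewrite interp2 !iw2 iw1 /=.
  apply: (E_of_S (r := A * C + C * A - A)); first by right; left.
  by rewrite !oppR addrA (addrC (C * A)).
- change (EE (iw [:: 2; 1]%N) (interp [:: [:: 1; 2]; [:: 1]]%N)).
  rewrite interp2 !iw2 iw1 /=.
  apply: (E_of_S (r := B * C + C * B - B)); first by right; right; left.
  by rewrite !oppR addrA (addrC (C * B)).
- change (EE (iw [:: 2; 2]%N) (interp [:: [:: 2]]%N)).
  rewrite interp_seq1 !iw2 iw1 /=.
  apply: (E_of_S (r := C ^+ 2 + C)); first by do 5 right.
  by rewrite !oppR expr2.
- change (EE (iw [:: 0; 0; 0; 0]%N) (interp [::])).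
  rewrite interp_nil iw4 /=.
  apply: (E_of_S (r := A ^+ 4)); first by do 3 right; left.
  by rewrite subr0.
- change (EE (iw [:: 1; 1; 1; 1]%N) (interp [::])).
  rewrite interp_nil iw4 /=.
  apply: (E_of_S (r := B ^+ 4)); first by do 4 right; left.
  by rewrite subr0.
Qed.

Lemma find_rule_sound rs w q : (forall r, r \in rs -> EE (iw r.1) (interp r.2)) ->
  find_rule rs w = Some q -> EE (iw w) (interp q).
Proof.
elim: rs => [|r rs IH] //= Hrs; case: ifP => H.
  case=> <-; rewrite -{1}(cat_take_drop (size r.1) w) (eqP H) iw_cat interp_map_catr.
  by apply: E_mul; [apply: Hrs; rewrite inE eqxx | apply: E_refl].
by apply: IH => r' Hr'; apply: Hrs; rewrite inE Hr' orbT.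
Qed.

Lemma rw_cons x w : rw (x :: w) =
  match find_rule rules (x :: w) with
  | Some q => Some q
  | None => omap (map (cons x)) (rw w) end.
Proof. by []. Qed.

Lemma rw_sound w q : rw w = Some q -> EE (iw w) (interp q).
Proof.
elim: w q => [|x w IH] q; first by [].
rewrite rw_cons; case Hf: (find_rule rules (x :: w)) => [q'|].
  by case=> <-; apply: (find_rule_sound rules_sound Hf).
case Hr: (rw w) => [q'|] //= [<-].
rewrite iw_cons interp_map_cons; apply: E_mul; [apply: E_refl | exact: IH].
Qed.

Lemma step_sound p : EE (interp (step p)) (interp p).
Proof.
rewrite /step /interp big_flatten /= big_map; apply: E_sum => w.
case Hr: (rw w) => [q|]; last by rewrite big_seq1; apply: E_refl.
by apply: E_sym; apply: rw_sound.
Qed.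

Lemma mulrn_odd (x : R) n : x *+ n = x *+ odd n.
Proof.
have H : forall m, x *+ m = x *+ odd m /\ x *+ m.+1 = x *+ odd m.+1.
  elim=> [|m [_ IH2]]; first by split; rewrite ?mulr0n ?mulr1n.
  split=> //; rewrite mulrS IH2 /= negbK; case: (odd m); rewrite /= ?mulr1n ?mulr0n ?addxx ?addr0 //.
by case: (H n).
Qed.

Lemma pcancel_eq p : interp (pcancel p) = interp p.
Proof.
rewrite /interp /pcancel -[RHS](big_undup_iterop_count) big_filter big_mkcond /=.
apply: eq_bigr => w _; rewrite Monoid.iteropE.
rewrite (_ : iter _ _ _ = iw w *+ count_mem w p); last by elim: (count_mem w p) => //= m ->; rewrite mulrS.
by rewrite mulrn_odd; case: (odd _); rewrite ?mulr1n ?mulr0n.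
Qed.

Lemma nf_sound n p : EE (interp (nf n p)) (interp p).
Proof.
elim: n p => [|n IH] p /=; first exact: E_refl.
apply: E_trans (IH _) _; rewrite pcancel_eq; exact: step_sound.
Qed.

Lemma zcheck_sound p : zcheck p -> EE (interp p) 0.
Proof.
move=> /eqP H; apply: E_trans (E_sym (nf_sound 300 p)) _.
by rewrite H interp_nil; apply: E_refl.
Qed.

Lemma zcheck_eq px py : zcheck (px ++ py) -> EE (interp px) (interp py).
Proof.
move=> /zcheck_sound; rewrite interp_cat /E subr0.
by rewrite (oppR (interp py)).
Qed.
End Interp.

End MP2.
Import MP2.

Module MP3.
Local Open Scope ring_scope.
Set Implicit Arguments.
Unset Strict Implicit.
Unset Printing Implicit Defensive.

Section PA.
Variables (k : fieldType) (P : algType k) (pe : qpath -> P).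
Hypothesis HP : is_path_algebra pe.

Definition validl (l : seq (k * qpath)) := all (fun t => valid_path t.2) l.
Definition lsum (V : lmodType k) (F : qpath -> V) (l : seq (k * qpath)) : V :=
  \sum_(t <- l) t.1 *: F t.2.

Lemma regroup (V : lmodType k) (G : qpath -> V) (l : seq (k * qpath)) :
  lsum G l = lsum G [seq (\sum_(t <- l | t.2 == p) t.1, p) | p <- undup (map snd l)].
Proof.
rewrite /lsum big_map.
set u := undup _.
have Hu : uniq u by apply: undup_uniq.
transitivity (\sum_(t <- l) \sum_(p <- u | t.2 == p) t.1 *: G p).
  rewrite [in LHS]big_seq [in RHS]big_seq; apply: eq_bigr => t Ht; rewrite (eq_bigl (fun p => p == t.2)); last by move=> p; rewrite eq_sym.
  rewrite -big_filter (@filter_pred1_uniq _ u t.2) //.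
    by rewrite big_seq1.
  by rewrite /u mem_undup; apply/mapP; exists t.
rewrite (exchange_big_dep predT) //=; apply: eq_bigr => p _.
by rewrite scaler_suml.
Qed.

Lemma lin_ext (V : lmodType k) (F : qpath -> V) (l : seq (k * qpath)) :
  validl l -> lsum pe l = 0 -> lsum F l = 0.
Proof.
case: HP => _ _ Hind Hv H0.
rewrite regroup; rewrite regroup in H0.
set l' := [seq _ | p <- _] in H0 *.
have Hu : uniq [seq i.2 | i <- l'] by rewrite -map_comp map_id_in // undup_uniq.
have Hval : forall t, t \in l' -> valid_path t.2.
  move=> t /mapP[p' Hp' ->] /=; move: Hp'; rewrite mem_undup => /mapP[t' Ht' ->].
  by move/allP: Hv => /(_ t' Ht').
have Hz := Hind l' Hu Hval H0.
rewrite /lsum big_seq big1 // => t Ht.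
by rewrite (Hz t Ht) scale0r.
Qed.

Lemma lsum_cat (V : lmodType k) (F : qpath -> V) l1 l2 : lsum F (l1 ++ l2) = lsum F l1 + lsum F l2.
Proof. by rewrite /lsum big_cat. Qed.

Definition lneg (l : seq (k * qpath)) := [seq (- t.1, t.2) | t <- l].
Lemma lsum_neg (V : lmodType k) (F : qpath -> V) l : lsum F (lneg l) = - lsum F l.
Proof. by rewrite /lsum big_map -sumrN; apply: eq_bigr => t _; rewrite scaleNr. Qed.
Lemma validl_cat l1 l2 : validl (l1 ++ l2) = validl l1 && validl l2.
Proof. by rewrite /validl all_cat. Qed.
Lemma validl_neg l : validl (lneg l) = validl l.
Proof. by rewrite /validl all_map. Qed.

Lemma span_ex (y : P) : exists l, validl l && (y == lsum pe l).
Proof.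
case: HP => _ Hs _; case: (Hs y) => l [Hv ->]; exists l.
by rewrite eqxx andbT; apply/allP.
Qed.

Definition coords (y : P) : seq (k * qpath) := xchoose (span_ex y).
Lemma coordsP y : validl (coords y) /\ y = lsum pe (coords y).
Proof. by have /andP[H1 /eqP H2] := xchooseP (span_ex y). Qed.

Definition plift (V : lmodType k) (F : qpath -> V) (y : P) : V := lsum F (coords y).

Lemma plift_rep (V : lmodType k) (F : qpath -> V) y l :
  validl l -> y = lsum pe l -> plift F y = lsum F l.
Proof.
move=> Hv Hy; have [Hc Hc'] := coordsP y.
apply/eqP; rewrite -subr_eq0 -lsum_neg -lsum_cat; apply/eqP.
apply: lin_ext; first by rewrite validl_cat validl_neg Hc Hv.
by rewrite lsum_cat lsum_neg -Hc' -Hy subrr.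
Qed.

Lemma plift_pe (V : lmodType k) (F : qpath -> V) p : valid_path p -> plift F (pe p) = F p.
Proof.
move=> Hp; rewrite (@plift_rep _ F _ ([:: (1, p)])) /lsum ?big_seq1 ?scale1r //.
by rewrite /validl /= Hp.
Qed.

Lemma plift_add (V : lmodType k) (F : qpath -> V) x y : plift F (x + y) = plift F x + plift F y.
Proof.
have [Hx Hx'] := coordsP x; have [Hy Hy'] := coordsP y.
rewrite (@plift_rep _ F _ (coords x ++ coords y)) ?lsum_cat //.
  by rewrite validl_cat Hx Hy.
by rewrite ?lsum_cat -Hx' -Hy'.
Qed.

Definition lscale (c : k) (l : seq (k * qpath)) := [seq (c * t.1, t.2) | t <- l].
Lemma lsum_scale (V : lmodType k) (F : qpath -> V) c l : lsum F (lscale c l) = c *: lsum F l.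
Proof. by rewrite /lsum big_map scaler_sumr; apply: eq_bigr => t _; rewrite scalerA. Qed.

Lemma plift_scale (V : lmodType k) (F : qpath -> V) c x : plift F (c *: x) = c *: plift F x.
Proof.
have [Hx Hx'] := coordsP x.
rewrite (@plift_rep _ F _ (lscale c (coords x))) ?lsum_scale //.
  by rewrite /validl all_map.
by rewrite ?lsum_scale -Hx'.
Qed.

Lemma plift0 (V : lmodType k) (F : qpath -> V) : plift F 0 = 0.
Proof. by rewrite (@plift_rep _ F _ ([::])) // /lsum big_nil. Qed.

Lemma plift_sum (V : lmodType k) (F : qpath -> V) (I : Type) (r : seq I) (G : I -> P) :
  plift F (\sum_(i <- r) G i) = \sum_(i <- r) plift F (G i).
Proof.
elim: r => [|i r IH]; first by rewrite !big_nil plift0.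
by rewrite !big_cons plift_add IH.
Qed.

Lemma plift_lsum (V : lmodType k) (F : qpath -> V) l : validl l -> plift F (lsum pe l) = lsum F l.
Proof. by move=> Hv; apply: plift_rep. Qed.
End PA.

End MP3.
Import MP3.

Module MP4.
Local Open Scope ring_scope.
Set Implicit Arguments.
Unset Strict Implicit.
Unset Printing Implicit Defensive.

Lemma ord4_cases (x : 'I_4) : x = alpha1 \/ x = alpha2 \/ x = beta1 \/ x = beta2.
Proof.
case: x => [[|[|[|[|//]]]] H].
- by left; apply: val_inj.
- by right; left; apply: val_inj.
- by right; right; left; apply: val_inj.
- by right; right; right; apply: val_inj.
Qed.

Lemma ord2_cases (v : 'I_2) : v = v0 \/ v = v1.
Proof.
case: v => [[|[|//]] H]; first by left; apply: val_inj.
by right; apply: val_inj.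
Qed.

Ltac pick := first [ by left | right; pick | by [] ].

Lemma ig_sub (R : nzRingType) (S1 S2 : R -> Prop) x :
  (forall s, S1 s -> ideal_gen S2 s) -> ideal_gen S1 x -> ideal_gen S2 x.
Proof.
move=> H [l [Hl ->]]; elim: l Hl => [|t l IH] Hl; first by rewrite big_nil; apply: ig0.
rewrite big_cons; apply: igD.
  by apply: igMr; apply: igMl; apply: H; apply: Hl; rewrite inE eqxx.
by apply: IH => t' Ht'; apply: Hl; rewrite inE Ht' orbT.
Qed.

Section PA2.
Variables (k : fieldType) (P : algType k) (pe : qpath -> P).
Hypothesis HP : is_path_algebra pe.
Local Notation arr := (arr pe).
Local Notation eps := (eps pe).
Local Notation IQ := (I_Q pe).

Lemma pe_mul p q : valid_path p -> valid_path q ->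
  pe p * pe q = if path_end p == q.1 then pe (p.1, p.2 ++ q.2) else 0.
Proof. by case: HP => H _ _; apply: H. Qed.

Lemma valid_arr x : valid_path (src x, [:: x]).
Proof. by rewrite /valid_path /= eqxx. Qed.

Lemma arr_mul x y : arr x * arr y = if tgt x == src y then pe (src x, [:: x; y]) else 0.
Proof. by rewrite /arr pe_mul ?valid_arr. Qed.

Lemma arr_mul0 x y : tgt x != src y -> arr x * arr y = 0.
Proof. by rewrite arr_mul => /negbTE ->. Qed.

Lemma valid_cons v x s : valid_path (v, x :: s) -> v = src x /\ valid_path (tgt x, s).
Proof.
rewrite /valid_path /= => /andP[/eqP -> H]; split=> //.
by case: s H => //= y s /andP[/eqP -> ->]; rewrite eqxx.
Qed.

Lemma pe_cons v x s : valid_path (v, x :: s) -> pe (v, x :: s) = arr x * pe (tgt x, s).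
Proof.
move=> H; have [Hv Hs] := valid_cons H.
by rewrite /arr pe_mul ?valid_arr // /path_end /= eqxx Hv.
Qed.

Lemma eps_mul v p : valid_path p -> eps v * pe p = if v == p.1 then pe p else 0.
Proof.
move=> Hp; rewrite /eps pe_mul // /path_end /=; case: p Hp => w s Hp /=.
by case: (v =P w) => [->|].
Qed.

Lemma one_eps : (1 : P) = eps v0 + eps v1.
Proof.
set y := 1 - (eps v0 + eps v1).
have Hy : forall p, valid_path p -> y * pe p = 0.
  move=> p Hp; rewrite /y mulrBl mul1r mulrDl !eps_mul //.
  case: p Hp => w s Hp /=; case: (ord2_cases w) => -> /=; by rewrite ?addr0 ?add0r subrr.
apply/eqP; rewrite -subr_eq0 -/y; apply/eqP.
have [Hc Hc'] := coordsP HP 1.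
rewrite -[y]mulr1 Hc' /lsum mulr_sumr big_seq big1 // => t Ht.
rewrite -scalerAr Hy ?scaler0 //.
by move/allP: Hc => /(_ t Ht).
Qed.

Lemma IQ_gen x : I_rel pe x -> IQ x.
Proof. exact: igS. Qed.

Lemma triple x y z : IQ (arr x * arr y * arr z).
Proof.
case: (ord4_cases x) => [->|[->|[->|->]]]; case: (ord4_cases y) => [->|[->|[->|->]]]; case: (ord4_cases z) => [->|[->|[->|->]]];
  try (rewrite arr_mul0 // ?mul0r; exact: ig0);
  try (rewrite -mulrA arr_mul0 // mulr0; exact: ig0);
  try (apply: igMr; apply: igS; rewrite /I_rel; pick);
  try (rewrite -mulrA; apply: igMl; apply: igS; rewrite /I_rel; pick).
-
  have -> : arr alpha1 * arr beta2 * arr alpha1 =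
    arr alpha1 * (arr beta1 * arr alpha2 + arr beta2 * arr alpha1) - arr alpha1 * arr beta1 * arr alpha2.
    by rewrite mulrDr !mulrA addrC addKr.
  apply: igB; first by apply: igMl; apply: igS; rewrite /I_rel; pick.
  by apply: igMr; apply: igS; rewrite /I_rel; pick.
-
  have -> : arr alpha2 * arr beta1 * arr alpha2 =
    (arr alpha1 * arr beta2 + arr alpha2 * arr beta1) * arr alpha2 - arr alpha1 * (arr beta2 * arr alpha2).
    by rewrite mulrDl !mulrA addrC addKr.
  apply: igB; first by apply: igMr; apply: igS; rewrite /I_rel; pick.
  by apply: igMl; apply: igS; rewrite /I_rel; pick.
-
  have -> : arr beta1 * arr alpha2 * arr beta1 =
    arr beta1 * (arr alpha1 * arr beta2 + arr alpha2 * arr beta1) - arr beta1 * arr alpha1 * arr beta2.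
    by rewrite mulrDr !mulrA addrC addKr.
  apply: igB; first by apply: igMl; apply: igS; rewrite /I_rel; pick.
  by apply: igMr; apply: igS; rewrite /I_rel; pick.
-
  have -> : arr beta2 * arr alpha1 * arr beta2 =
    (arr beta1 * arr alpha2 + arr beta2 * arr alpha1) * arr beta2 - arr beta1 * (arr alpha2 * arr beta2).
    by rewrite mulrDl !mulrA addrC addKr.
  apply: igB; first by apply: igMr; apply: igS; rewrite /I_rel; pick.
  by apply: igMl; apply: igS; rewrite /I_rel; pick.
Qed.

Definition bp (i : nat) : qpath :=
  match i with
  | 0 => (v0, [::]) | 1 => (v1, [::])
  | 2 => (v0, [:: alpha1]) | 3 => (v0, [:: alpha2])
  | 4 => (v1, [:: beta1]) | 5 => (v1, [:: beta2])
  | 6 => (v0, [:: alpha1; beta2]) | _ => (v1, [:: beta1; alpha2]) end.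

Definition bsum (D : nat -> k) : P := \sum_(i < 8) D i *: pe (bp i).
Definition delta (j : nat) (c : k) : nat -> k := fun i => if i == j then c else 0.

Lemma bsum_delta j c : (j < 8)%N -> bsum (delta j c) = c *: pe (bp j).
Proof.
move=> Hj; rewrite /bsum (bigD1 (Ordinal Hj)) //= big1 ?addr0 /delta ?eqxx //.
move=> i Hi; rewrite ifF ?scale0r //; apply/negbTE; apply: contra Hi => /eqP H.
by apply/eqP/val_inj.
Qed.

Lemma bsum_add D1 D2 : bsum (fun i => D1 i + D2 i) = bsum D1 + bsum D2.
Proof. by rewrite /bsum -big_split; apply: eq_bigr => i _; rewrite scalerDl. Qed.

Lemma bsum_scale c D : bsum (fun i => c * D i) = c *: bsum D.
Proof. by rewrite /bsum scaler_sumr; apply: eq_bigr => i _; rewrite scalerA. Qed.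

Lemma bsum0 : bsum (fun _ => 0) = 0.
Proof. by rewrite /bsum big1 // => i _; rewrite scale0r. Qed.

Lemma pe2 v x y : valid_path (v, [:: x; y]) -> pe (v, [:: x; y]) = arr x * arr y.
Proof.
move=> H; have [Hv Hs] := valid_cons H.
have Hxy : tgt x == src y by move: Hs; rewrite /valid_path /= eq_sym => /andP[].
by rewrite arr_mul Hxy Hv.
Qed.

Lemma valid2 v x y : valid_path (v, [:: x; y]) -> tgt x = src y.
Proof. by move=> H; have [_ Hs] := valid_cons H; move: Hs; rewrite /valid_path /= => /andP[/eqP ->]. Qed.

Lemma reduce p : valid_path p -> exists D, IQ (pe p - bsum D).
Proof.
case: p => v [|x [|y [|z s]]] H.
- case: (ord2_cases v) => ->.
  + by exists (delta 0 1); rewrite bsum_delta // scale1r subrr; apply: ig0.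
  + by exists (delta 1 1); rewrite bsum_delta // scale1r subrr; apply: ig0.
- have [-> _] := valid_cons H.
  case: (ord4_cases x) => [->|[->|[->|->]]].
  + by exists (delta 2 1); rewrite bsum_delta // scale1r subrr; apply: ig0.
  + by exists (delta 3 1); rewrite bsum_delta // scale1r subrr; apply: ig0.
  + by exists (delta 4 1); rewrite bsum_delta // scale1r subrr; apply: ig0.
  + by exists (delta 5 1); rewrite bsum_delta // scale1r subrr; apply: ig0.
- have Hxy := valid2 H; rewrite (pe2 H).
  case: (ord4_cases x) Hxy => [->|[->|[->|->]]]; case: (ord4_cases y) => [->|[->|[->|->]]] Hxy;
    try (by move: Hxy => /(congr1 val)).
  + by exists (fun _ => 0); rewrite bsum0 subr0; apply: igS; rewrite /I_rel; pick.
  + exists (delta 6 1); rewrite bsum_delta // scale1r pe2 //; rewrite subrr; exact: ig0.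
  + exists (delta 6 (-1)); rewrite bsum_delta // scaleN1r pe2 // opprK addrC.
    by apply: igS; rewrite /I_rel; pick.
  + by exists (fun _ => 0); rewrite bsum0 subr0; apply: igS; rewrite /I_rel; pick.
  + by exists (fun _ => 0); rewrite bsum0 subr0; apply: igS; rewrite /I_rel; pick.
  + exists (delta 7 1); rewrite bsum_delta // scale1r pe2 //; rewrite subrr; exact: ig0.
  + exists (delta 7 (-1)); rewrite bsum_delta // scaleN1r pe2 // opprK addrC.
    by apply: igS; rewrite /I_rel; pick.
  + by exists (fun _ => 0); rewrite bsum0 subr0; apply: igS; rewrite /I_rel; pick.
- exists (fun _ => 0); rewrite bsum0 subr0.
  have [_ H1] := valid_cons H; have [_ H2] := valid_cons H1.
  rewrite (pe_cons H) (pe_cons H1) (pe_cons H2) !mulrA.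
  by apply: igMr; apply: triple.
Qed.

Lemma card_src (v : 'I_2) : (#|[set x : 'I_4 | src x == v]| <= 2)%N.
Proof.
case: (ord2_cases v) => ->.
  rewrite (_ : [set x | _] = [set alpha1; alpha2]) ?cards2 ?leqnn //.
  by apply/setP => x; rewrite !inE; case: (ord4_cases x) => [->|[->|[->|->]]].
rewrite (_ : [set x | _] = [set beta1; beta2]) ?cards2 ?leqnn //.
by apply/setP => x; rewrite !inE; case: (ord4_cases x) => [->|[->|[->|->]]].
Qed.

Lemma card_tgt (v : 'I_2) : (#|[set x : 'I_4 | tgt x == v]| <= 2)%N.
Proof.
case: (ord2_cases v) => ->.
  rewrite (_ : [set x | _] = [set beta1; beta2]) ?cards2 ?leqnn //.
  by apply/setP => x; rewrite !inE; case: (ord4_cases x) => [->|[->|[->|->]]].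
rewrite (_ : [set x | _] = [set alpha1; alpha2]) ?cards2 ?leqnn //.
by apply/setP => x; rewrite !inE; case: (ord4_cases x) => [->|[->|[->|->]]].
Qed.

Lemma sb1 : forall al be ga : 'I_4, al != be -> src al = src be -> src be = tgt ga ->
          IQ (arr ga * arr al) \/ IQ (arr ga * arr be).
Proof.
move=> al be ga; case: (ord4_cases al) => [->|[->|[->|->]]];
  case: (ord4_cases be) => [->|[->|[->|->]]]; case: (ord4_cases ga) => [->|[->|[->|->]]];
  move=> H1 H2 H3; try (by rewrite eqxx in H1);
  try (by move: H2 => /(congr1 val)); try (by move: H3 => /(congr1 val));
  first [left; apply: igS; rewrite /I_rel; pick | right; apply: igS; rewrite /I_rel; pick].
Qed.

Lemma sb2 : forall al be ga : 'I_4, al != be -> tgt al = tgt be -> tgt be = src ga ->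
          IQ (arr al * arr ga) \/ IQ (arr be * arr ga).
Proof.
move=> al be ga; case: (ord4_cases al) => [->|[->|[->|->]]];
  case: (ord4_cases be) => [->|[->|[->|->]]]; case: (ord4_cases ga) => [->|[->|[->|->]]];
  move=> H1 H2 H3; try (by rewrite eqxx in H1);
  try (by move: H2 => /(congr1 val)); try (by move: H3 => /(congr1 val));
  first [left; apply: igS; rewrite /I_rel; pick | right; apply: igS; rewrite /I_rel; pick].
Qed.

Lemma adm : admissible pe IQ.
Proof.
exists 3; split=> //; split.
  move=> x; apply: ig_sub => s [l [Hl ->]].
  case: l Hl => [|x1 [|x2 [|x3 [|//]]]] // _.
  by rewrite !big_cons big_nil mulr1 mulrA; apply: triple.
move=> x; apply: ig_sub => s Hs.
have H2 : forall a b, arrow_ideal_pow pe 2 (arr a * arr b).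
  move=> a b; apply: igS; exists [:: a; b]; split=> //.
  by rewrite !big_cons big_nil mulr1.
by case: Hs => [->|[->|[->|[->|[->|->]]]]]; rewrite /arrow_ideal_pow; try apply: igD; apply: H2.
Qed.

Lemma sbiserial : special_biserial pe IQ.
Proof.
split; [exact: adm|exact: card_src|exact: card_tgt|exact: sb1|exact: sb2].
Qed.
End PA2.
End MP4.
Import MP4.

Module MP5a.
Set Implicit Arguments.
Unset Strict Implicit.
Unset Printing Implicit Defensive.

Definition pe0 : wpoly := pmul [:: [::]; [:: 0; 1]; [:: 0; 0; 1; 1]] [:: [::]; [:: 2]].
Definition pe1 : wpoly := pmul [:: [::]; [:: 0; 0; 1; 1]] [:: [:: 2]].
Definition pue : wpoly := pe0 ++ pe1.
Definition pg (n : nat) : wpoly :=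
  match n with 0 => pmul [:: [:: 0; 0; 0]] pe1 | 1 => pmul [:: [:: 1]] pe1
  | 2 => pmul [:: [:: 0]] pe0 | _ => pmul [:: [:: 1; 1; 1]] pe0 end.
Definition pev (n : nat) : wpoly := if n == 0 then pe0 else pe1.
Definition psrc (n : nat) : nat := if n < 2 then 0 else 1.
Definition ptgt (n : nat) : nat := if n < 2 then 1 else 0.
Definition pb (i : nat) : wpoly :=
  match i with 0 => pe0 | 1 => pe1 | 2 => pg 0 | 3 => pg 1 | 4 => pg 2 | 5 => pg 3
  | 6 => pmul (pg 0) (pg 3) | _ => pmul (pg 2) (pg 1) end.
Definition pif (b : bool) (p : wpoly) : wpoly := if b then p else [::].

Definition chk1 := all (fun v => all (fun w =>
  zcheck (pmul (pev v) (pev w) ++ pif (v == w) (pev v))) (iota 0 2)) (iota 0 2).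
Definition chk2 := all (fun v => all (fun x =>
  zcheck (pmul (pev v) (pg x) ++ pif (v == psrc x) (pg x))) (iota 0 4)) (iota 0 2).
Definition chk3 := all (fun x => all (fun w =>
  zcheck (pmul (pg x) (pev w) ++ pif (ptgt x == w) (pg x))) (iota 0 2)) (iota 0 4).
Definition chk4 := all (fun x => all (fun y =>
  (ptgt x != psrc y) ==> zcheck (pmul (pg x) (pg y))) (iota 0 4)) (iota 0 4).
Definition chk5 := all (fun x => zcheck (pmul pue (pg x) ++ pg x) && zcheck (pmul (pg x) pue ++ pg x)) (iota 0 4)
  && all (fun v => zcheck (pmul (pmul pue (pev v)) pue ++ pev v)) (iota 0 2).
Definition chk6 := [&& zcheck (pmul (pg 0) (pg 2)), zcheck (pmul (pg 1) (pg 3)),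
  zcheck (pmul (pg 2) (pg 0)), zcheck (pmul (pg 3) (pg 1)),
  zcheck (pmul (pg 0) (pg 3) ++ pmul (pg 1) (pg 2)) &
  zcheck (pmul (pg 2) (pg 1) ++ pmul (pg 3) (pg 0))].
Definition NW : wpoly := [:: [::]; [:: 2]; [:: 1]; [:: 1; 2]; [:: 1; 1]; [:: 1; 1; 2]; [:: 1; 1; 1]; [:: 1; 1; 1; 2]; [:: 0]; [:: 0; 2]; [:: 0; 1]; [:: 0; 1; 2]; [:: 0; 1; 1]; [:: 0; 1; 1; 2]; [:: 0; 1; 1; 1]; [:: 0; 1; 1; 1; 2]; [:: 0; 0]; [:: 0; 0; 2]; [:: 0; 0; 1]; [:: 0; 0; 1; 2]; [:: 0; 0; 1; 1]; [:: 0; 0; 1; 1; 2]; [:: 0; 0; 1; 1; 1]; [:: 0; 0; 1; 1; 1; 2]; [:: 0; 0; 0]; [:: 0; 0; 0; 2]; [:: 0; 0; 0; 1]; [:: 0; 0; 0; 1; 2]; [:: 0; 0; 0; 1; 1]; [:: 0; 0; 0; 1; 1; 2]; [:: 0; 0; 0; 1; 1; 1]; [:: 0; 0; 0; 1; 1; 1; 2]].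
Definition ctab : seq (seq bool) := [:: [:: true; true; false; false; false; false; false; false]; [:: false; true; false; false; false; false; false; false]; [:: false; false; false; true; false; false; false; false]; [:: false; false; false; true; false; false; false; false]; [:: false; false; false; false; false; false; false; false]; [:: false; false; false; false; false; false; false; false]; [:: false; false; false; false; false; true; false; false]; [:: false; false; false; false; false; false; false; false]; [:: false; false; false; false; true; false; false; false]; [:: false; false; false; false; false; false; false; false]; [:: false; false; false; false; false; false; true; true]; [:: false; false; false; false; false; false; false; true]; [:: false; false; false; false; false; false; false; false]; [:: false; false; false; false; false; false; false; false]; [:: false; false; false; false; false; false; false; false]; [:: false; false; false; false; false; false; false; false]; [:: false; false; false; false; false; false; false; false]; [:: false; false; false; false; false; false; false; false]; [:: false; false; false; false; false; false; false; false]; [:: false; false; false; false; false; false; false; false]; [:: false; false; false; false; false; false; true; false]; [:: false; false; false; false; false; false; false; false]; [:: false; false; false; false; false; false; false; false]; [:: false; false; false; false; false; false; false; false]; [:: false; false; true; false; false; false; false; false]; [:: false; false; true; false; false; false; false; false]; [:: false; false; false; false; false; false; false; false]; [:: false; false; false; false; false; false; false; false]; [:: false; false; false; false; false; false; false; false]; [:: false; false; false; false; false; false; false; false]; [:: false; false; false; false; false; false; true; false]; [:: false; false; false; false; false; false; false; false]].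
Definition chk7 := all (fun x => all (fun n => all (fun w => w \in NW) (nf 300 [:: x :: n])) NW) (iota 0 3).
Definition comb (c : seq bool) : wpoly := flatten [seq pif (nth false c i) (pb i) | i <- iota 0 8].
Definition coef (n : seq nat) : seq bool := nth [::] ctab (index n NW).
Definition chk8 := all (fun n => zcheck (pmul (pmul pue [:: n]) pue ++ comb (coef n))) NW.
Lemma chk1_ok : chk1. Proof. vm_compute. reflexivity. Qed.
Lemma chk2_ok : chk2. Proof. vm_compute. reflexivity. Qed.
Lemma chk3_ok : chk3. Proof. vm_compute. reflexivity. Qed.
Lemma chk4_ok : chk4. Proof. vm_compute. reflexivity. Qed.
Lemma chk5_ok : chk5. Proof. vm_compute. reflexivity. Qed.
Lemma chk6_ok : chk6. Proof. vm_compute. reflexivity. Qed.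
Lemma chk7_ok : chk7. Proof. vm_compute. reflexivity. Qed.
Lemma chk8_ok : chk8. Proof. vm_compute. reflexivity. Qed.
Lemma chk7' x n : x \in iota 0 3 -> n \in NW -> all (fun w => w \in NW) (nf 300 [:: x :: n]).
Proof.
move=> Hx Hn; have := chk7_ok; rewrite /chk7 => /allP /(_ x Hx) /allP; apply; exact: Hn.
Qed.
Lemma chk8' n : n \in NW -> zcheck (pmul (pmul pue [:: n]) pue ++ comb (coef n)).
Proof. by move=> Hn; have := chk8_ok; rewrite /chk8 => /allP; apply. Qed.

End MP5a.
Import MP5a.

Module MP5b.
Local Open Scope ring_scope.
Set Implicit Arguments.
Unset Strict Implicit.
Unset Printing Implicit Defensive.

Lemma all_iota_ord n (Pr : nat -> bool) : all Pr (iota 0 n) -> forall i : 'I_n, Pr i.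
Proof. by move=> /allP H i; apply: H; rewrite mem_iota add0n ltn_ord. Qed.

Lemma src_val x : val (src x) = psrc x.
Proof. by rewrite /src /psrc; case: ifP. Qed.
Lemma tgt_val x : val (tgt x) = ptgt x.
Proof. by rewrite /tgt /ptgt; case: ifP. Qed.

Section Main.
Variables (k : fieldType) (R : lalgType k) (A B C : R).
Hypothesis char2R : (2%:R : R) = 0.
Hypothesis scaleAr : forall (c : k) (x y : R), x * (c *: y) = c *: (x * y).
Variables (P : algType k) (pe : qpath -> P).
Hypothesis HP : is_path_algebra pe.

Local Notation EE := (E (relR A B C)).
Local Notation I := (interp A B C).

Lemma zeq p q : zcheck (p ++ q) -> EE (I p) (I q).
Proof. exact: zcheck_eq. Qed.

Lemma interp_pif b p : I (pif b p) = if b then I p else 0.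
Proof. by case: b; rewrite /pif ?interp_nil. Qed.

Definition g (x : 'I_4) : R := I (pg x).
Definition ev (v : 'I_2) : R := I (pev v).
Definition f (p : qpath) : R := if p.2 is [::] then ev p.1 else \prod_(x <- p.2) g x.
Definition phi : P -> R := plift HP f.

Lemma F1 (v w : 'I_2) : EE (ev v * ev w) (if v == w then ev v else 0).
Proof.
have := all_iota_ord (all_iota_ord chk1_ok v) w => /zeq.
by rewrite interp_pmul interp_pif val_eqE.
Qed.

Lemma F2 (v : 'I_2) (x : 'I_4) : EE (ev v * g x) (if v == src x then g x else 0).
Proof.
have := all_iota_ord (all_iota_ord chk2_ok v) x => /zeq.
by rewrite interp_pmul interp_pif -src_val val_eqE.
Qed.

Lemma F3 (x : 'I_4) (w : 'I_2) : EE (g x * ev w) (if tgt x == w then g x else 0).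
Proof.
have := all_iota_ord (all_iota_ord chk3_ok x) w => /zeq.
by rewrite interp_pmul interp_pif -tgt_val val_eqE.
Qed.

Lemma F4 (x y : 'I_4) : tgt x != src y -> EE (g x * g y) 0.
Proof.
have := all_iota_ord (all_iota_ord chk4_ok x) y.
rewrite -tgt_val -src_val val_eqE => H /(implyP H).
by rewrite -[pmul _ _]cats0 => /zeq; rewrite interp_pmul interp_nil.
Qed.

Lemma F5a (x : 'I_4) : EE (I pue * g x) (g x).
Proof.
have /andP[H _] := all_iota_ord (proj1 (andP chk5_ok)) x.
by move: H => /zeq; rewrite interp_pmul.
Qed.

Lemma F5b (x : 'I_4) : EE (g x * I pue) (g x).
Proof.
have /andP[_ H] := all_iota_ord (proj1 (andP chk5_ok)) x.
by move: H => /zeq; rewrite interp_pmul.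
Qed.

Lemma F5c (v : 'I_2) : EE (I pue * ev v * I pue) (ev v).
Proof.
have := all_iota_ord (proj2 (andP chk5_ok)) v.
by move=> /zeq; rewrite !interp_pmul.
Qed.

Lemma valid_concat p q : valid_path p -> valid_path q -> path_end p == q.1 ->
  valid_path (p.1, p.2 ++ q.2).
Proof.
case: p => v [|x s]; case: q => w s' /=; first by move=> _ Hq /eqP Hvw; change (v = w) in Hvw; rewrite Hvw.
rewrite /valid_path /= => /andP[Hx Hp] Hq /eqP Hend.
rewrite Hx /= cat_path Hp /=.
case: s' Hq => //= y s'' /andP[/eqP Hy Hpath].
by rewrite Hpath andbT Hy -Hend.
Qed.

Lemma prod_cons x s : \prod_(y <- x :: s) g y = g x * \prod_(y <- s) g y.
Proof. by rewrite big_cons. Qed.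

Lemma prod_last x s : \prod_(y <- x :: s) g y = (\prod_(y <- belast x s) g y) * g (last x s).
Proof. by rewrite lastI -cats1 big_cat big_seq1. Qed.

Lemma fmul p q : valid_path p -> valid_path q ->
  EE (if path_end p == q.1 then f (p.1, p.2 ++ q.2) else 0) (f p * f q).
Proof.
case: p => v [|x s]; case: q => w [|y s'] Hp Hq; rewrite /path_end /f /=.
- by apply: E_sym; apply: F1.
- have [Hw _] := valid_cons Hq; rewrite Hw prod_cons mulrA.
  apply: E_sym; apply: E_trans (E_mul (F2 v y) (E_refl _ _)) _.
  by case: ifP => _; rewrite ?mul0r; apply: E_refl.
- rewrite cats0 prod_last -mulrA.
  apply: E_sym; apply: E_trans (E_mul (E_refl _ _) (F3 _ w)) _.
  by case: ifP => _; rewrite ?mulr0; apply: E_refl.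
- have [Hw _] := valid_cons Hq; case: ifP => H.
    by rewrite -cat_cons big_cat; apply: E_refl.
  have Hne : tgt (last x s) != src y by rewrite -Hw H.
  rewrite prod_last prod_cons mulrA -(mulrA _ (g (last x s))).
  apply: E_sym; apply: E_trans (E_mul (E_mul (E_refl _ _) (F4 Hne)) (E_refl _ _)) _.
  by rewrite mulr0 mul0r; apply: E_refl.
Qed.

Lemma phi_pe p : valid_path p -> phi (pe p) = f p.
Proof. exact: plift_pe. Qed.
Lemma phi_add x y : phi (x + y) = phi x + phi y.
Proof. exact: plift_add. Qed.
Lemma phi_scale c x : phi (c *: x) = c *: phi x.
Proof. exact: plift_scale. Qed.
Lemma phi0 : phi 0 = 0.
Proof. exact: plift0. Qed.
Lemma phi_sum (J : Type) (r : seq J) (G : J -> P) :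
  phi (\sum_(i <- r) G i) = \sum_(i <- r) phi (G i).
Proof. exact: plift_sum. Qed.
Lemma phi_opp x : phi (- x) = - phi x.
Proof. by rewrite -scaleN1r phi_scale scaleN1r. Qed.
Lemma phi_sub x y : phi (x - y) = phi x - phi y.
Proof. by rewrite phi_add phi_opp. Qed.

Lemma lsum_mulR (lx ly : seq (k * qpath)) (F : qpath -> R) :
  lsum F lx * lsum F ly =
  \sum_(t1 <- lx) \sum_(t2 <- ly) (t1.1 * t2.1) *: (F t1.2 * F t2.2).
Proof.
rewrite /lsum mulr_suml; apply: eq_bigr => t1 _; rewrite mulr_sumr; apply: eq_bigr => t2 _.
by rewrite -scalerAl scaleAr scalerA.
Qed.

Lemma lsum_mulP (lx ly : seq (k * qpath)) :
  lsum pe lx * lsum pe ly =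
  \sum_(t1 <- lx) \sum_(t2 <- ly) (t1.1 * t2.1) *: (pe t1.2 * pe t2.2).
Proof.
rewrite /lsum mulr_suml; apply: eq_bigr => t1 _; rewrite mulr_sumr; apply: eq_bigr => t2 _.
by rewrite -scalerAl -scalerAr scalerA.
Qed.

Lemma phi_mul x y : EE (phi (x * y)) (phi x * phi y).
Proof.
have [Hx Hx'] := coordsP HP x; have [Hy Hy'] := coordsP HP y.
have Exy : x * y = \sum_(t1 <- coords HP x) \sum_(t2 <- coords HP y)
    (t1.1 * t2.1) *: (pe t1.2 * pe t2.2).
  by rewrite {1}Hx' {1}Hy' lsum_mulP.
rewrite Exy (_ : phi x * phi y = lsum f (coords HP x) * lsum f (coords HP y)) // lsum_mulR.
rewrite phi_sum; apply: E_sum_in => t1 Ht1.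
rewrite phi_sum; apply: E_sum_in => t2 Ht2.
rewrite phi_scale; apply: E_scale.
have Hp : valid_path t1.2 by move/allP: Hx => /(_ t1 Ht1).
have Hq : valid_path t2.2 by move/allP: Hy => /(_ t2 Ht2).
have := fmul Hp Hq; rewrite (pe_mul HP Hp Hq).
case Hb: (path_end t1.2 == t2.2.1) => H.
  by rewrite phi_pe //; apply: valid_concat.
by rewrite phi0.
Qed.

Lemma ev0 : ev v0 = I pe0. Proof. by []. Qed.
Lemma ev1 : ev v1 = I pe1. Proof. by []. Qed.

Lemma phi_one : phi 1 = I pue.
Proof.
rewrite (one_eps HP) phi_add /eps !phi_pe //.
by rewrite /f /= ev0 ev1 /pue interp_cat.
Qed.

Lemma f_ue p : valid_path p -> EE (f p) (I pue * f p * I pue).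
Proof.
case: p => v [|x s] Hp; rewrite /f /=; first exact: E_sym (F5c v).
apply: E_sym; rewrite prod_cons mulrA.
apply: E_trans (E_mul (E_mul (F5a x) (E_refl _ _)) (E_refl _ _)) _.
rewrite -prod_cons prod_last -mulrA.
exact: E_mul (E_refl _ _) (F5b _).
Qed.

Lemma phi_ue x : EE (phi x) (I pue * phi x * I pue).
Proof.
have [Hx _] := coordsP HP x.
rewrite /phi /plift /lsum [I pue * _]mulr_sumr [_ * I pue]mulr_suml; apply: E_sum_in => t Ht.
rewrite scaleAr -scalerAl; apply: E_scale; apply: f_ue.
by move/allP: Hx => /(_ t Ht).
Qed.

Lemma phi_arr x : phi (arr pe x) = g x.
Proof. by rewrite /arr phi_pe ?valid_arr // /f /= big_seq1. Qed.

Definition reach (z : R) := exists x, EE (phi x) z.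

Lemma reach_E z z' : reach z -> EE z z' -> reach z'.
Proof. by move=> [x Hx] H; exists x; apply: E_trans Hx H. Qed.

Lemma reach0 : reach 0.
Proof. by exists 0; rewrite phi0; apply: E_refl. Qed.

Lemma reach_add z1 z2 : reach z1 -> reach z2 -> reach (z1 + z2).
Proof. by move=> [x1 H1] [x2 H2]; exists (x1 + x2); rewrite phi_add; apply: E_add. Qed.

Lemma reach_scale c z : reach z -> reach (c *: z).
Proof. by move=> [x H]; exists (c *: x); rewrite phi_scale; apply: E_scale. Qed.

Lemma reach_sum (J : Type) (r : seq J) (G : J -> R) :
  (forall j, reach (G j)) -> reach (\sum_(j <- r) G j).
Proof.
move=> H; elim: r => [|j r IH]; first by rewrite big_nil; apply: reach0.
by rewrite big_cons; apply: reach_add.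
Qed.

Lemma reach_sum_in (J : eqType) (r : seq J) (G : J -> R) :
  (forall j, j \in r -> reach (G j)) -> reach (\sum_(j <- r) G j).
Proof.
elim: r => [|j r IH] H; first by rewrite big_nil; apply: reach0.
rewrite big_cons; apply: reach_add; first by apply: H; rewrite inE eqxx.
by apply: IH => j' Hj'; apply: H; rewrite inE Hj' orbT.
Qed.

Lemma fbp i : (i < 8)%N -> f (bp i) = I (pb i).
Proof.
case: i => [|[|[|[|[|[|[|[|//]]]]]]]] _; try by [].
- by rewrite /f big_seq1.
- by rewrite /f big_seq1.
- by rewrite /f big_seq1.
- by rewrite /f big_seq1.
- by rewrite /f big_cons big_seq1; change (I (pb 6)) with (I (pmul (pg 0) (pg 3))); rewrite interp_pmul.
- by rewrite /f big_cons big_seq1; change (I (pb 7)) with (I (pmul (pg 2) (pg 1))); rewrite interp_pmul.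
Qed.

Lemma reach_pb i : (i < 8)%N -> reach (I (pb i)).
Proof. by move=> Hi; exists (pe (bp i)); rewrite phi_pe ?fbp //; [apply: E_refl | case: i Hi => [|[|[|[|[|[|[|[|//]]]]]]]]]. Qed.

Lemma reach_comb c : reach (I (comb c)).
Proof.
rewrite /comb /interp big_flatten big_map; apply: reach_sum_in => i.
rewrite mem_iota add0n => /andP[_ Hi].
rewrite -/(I _) interp_pif; case: ifP => _; [exact: reach_pb | exact: reach0].
Qed.

Lemma reach_NW n : n \in NW -> reach (I pue * iw A B C n * I pue).
Proof.
move=> Hn; have := chk8' Hn => /zeq.
rewrite !interp_pmul interp_seq1 => H.
exact: reach_E (reach_comb _) (E_sym H).
Qed.

Lemma gl_norm x : gl A B C x = gl A B C (if (x < 3)%N then x else 2).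
Proof. by case: x => [|[|[|x]]]. Qed.

Lemma word_NW w : exists q, all (fun u => u \in NW) q /\ EE (iw A B C w) (I q).
Proof.
elim: w => [|x w [q [Hq He]]].
  by exists [:: [::]]; split => //; rewrite interp_seq1; apply: E_refl.
set x' := if (x < 3)%N then x else 2.
have Hx' : x' \in iota 0 3 by rewrite /x'; case: ifP => //; rewrite mem_iota.
exists (flatten [seq nf 300 [:: x' :: n] | n <- q]); split.
  apply/allP => u /flattenP[l0 /mapP[n Hn ->] Hu].
  have Hn' : n \in NW by move/allP: Hq; apply.
  by move/allP: (chk7' Hx' Hn'); apply.
rewrite iw_cons; apply: E_trans (E_mul (E_refl _ _) He) _.
rewrite /interp big_flatten big_map mulr_sumr; apply: E_sum => n.
apply: E_sym; apply: E_trans (nf_sound A B C char2R 300 [:: x' :: n]) _.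
by rewrite interp_seq1 iw_cons -gl_norm; apply: E_refl.
Qed.

Hypothesis Hspan : forall y : R, exists l : seq (k * seq nat),
  y = \sum_(t <- l) t.1 *: iw A B C t.2.

Lemma surj y : exists x, EE (phi x) (I pue * y * I pue).
Proof.
have [l ->] := Hspan y.
rewrite [I pue * _]mulr_sumr [_ * I pue]mulr_suml; apply: reach_sum => t.
rewrite scaleAr -scalerAl; apply: reach_scale.
have [q [Hq He]] := word_NW t.2.
apply: reach_E (E_mul (E_mul (E_refl _ _) (E_sym He)) (E_refl _ _)).
have -> : forall (x y : R) p, x * I p * y = \sum_(n <- p) x * iw A B C n * y.
  by move=> x0 y0 p; rewrite /interp mulr_sumr mulr_suml.
apply: reach_sum_in => n Hn; apply: reach_NW.
by move/allP: Hq; apply.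
Qed.

Lemma zeq0 p : zcheck p -> EE (I p) 0.
Proof.
move=> H; have H' : zcheck (p ++ [::]) by rewrite cats0.
by have := zeq H'; rewrite interp_nil.
Qed.

Lemma gg_zero (x y : 'I_4) : zcheck (pmul (pg x) (pg y)) -> EE (g x * g y) 0.
Proof. by move/zeq0; rewrite interp_pmul. Qed.

Lemma gg_eq (x y x' y' : 'I_4) : zcheck (pmul (pg x) (pg y) ++ pmul (pg x') (pg y')) ->
  EE (g x * g y + g x' * g y') 0.
Proof.
move/zeq; rewrite !interp_pmul -/(g x) -/(g y) -/(g x') -/(g y') => H.
apply: E_trans (E_add H (E_refl _ _)) _; rewrite addxx //; exact: E_refl.
Qed.

Lemma F6 : EE (g alpha1 * g beta1) 0 /\ EE (g alpha2 * g beta2) 0 /\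
  EE (g beta1 * g alpha1) 0 /\ EE (g beta2 * g alpha2) 0 /\
  EE (g alpha1 * g beta2 + g alpha2 * g beta1) 0 /\
  EE (g beta1 * g alpha2 + g beta2 * g alpha1) 0.
Proof.
split; first by apply: gg_zero; vm_compute.
split; first by apply: gg_zero; vm_compute.
split; first by apply: gg_zero; vm_compute.
split; first by apply: gg_zero; vm_compute.
split; first by apply: gg_eq; vm_compute.
by apply: gg_eq; vm_compute.
Qed.

Lemma phi_gen s : I_rel pe s -> EE (phi s) 0.
Proof.
have [h1 [h2 [h3 [h4 [h5 h6]]]]] := F6.
case=> [->|[->|[->|[->|[->|->]]]]];
  try (apply: E_trans (phi_mul _ _) _; rewrite !phi_arr; assumption);
  rewrite phi_add; apply: E_trans (E_add (phi_mul _ _) (phi_mul _ _)) _; rewrite !phi_arr; assumption.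
Qed.

Lemma kernel1 x : I_Q pe x -> EE (phi x) 0.
Proof.
move=> [l [Hl ->]]; rewrite phi_sum.
apply: E_trans (E_sum_in (g := fun _ => 0) _) _; last by rewrite big1 //; apply: E_refl.
move=> t Ht; apply: E_trans (phi_mul _ _) _.
apply: E_trans (E_mul (E_trans (phi_mul _ _) (E_mul (E_refl _ _) (phi_gen (Hl t Ht)))) (E_refl _ _)) _.
by rewrite mulr0 mul0r; apply: E_refl.
Qed.

Lemma reduce_l l : validl l -> exists D, I_Q pe (lsum pe l - bsum pe D).
Proof.
elim: l => [|t l IH] Hv.
  by exists (fun _ => 0); rewrite bsum0 /lsum big_nil subr0; apply: ig0.
move: Hv; rewrite /validl /= => /andP[Ht Hl].
have [D1 H1] := reduce HP Ht; have [D2 H2] := IH Hl.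
exists (fun i => t.1 * D1 i + D2 i); rewrite bsum_add bsum_scale /lsum big_cons -/(lsum pe l).
have -> : t.1 *: pe t.2 + lsum pe l - (t.1 *: bsum pe D1 + bsum pe D2) =
  t.1 *: (pe t.2 - bsum pe D1) + (lsum pe l - bsum pe D2).
  by rewrite scalerBr opprD addrACA.
by apply: igD => //; apply: igZ.
Qed.

Hypothesis Hsep : forall D : nat -> k,
  EE (\sum_(i < 8) D i *: I (pb i)) 0 -> forall i, (i < 8)%N -> D i = 0.

Lemma kernel2 x : EE (phi x) 0 -> I_Q pe x.
Proof.
move=> H; have [Hv Hx] := coordsP HP x.
have [D HD] := reduce_l Hv; rewrite -Hx in HD.
have H1 := kernel1 HD; rewrite phi_sub in H1.
have H2 : EE (phi (bsum pe D)) 0.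
  have := E_add H (E_opp H1); rewrite subr0.
  by rewrite opprB addrC subrK.
have Hb : phi (bsum pe D) = \sum_(i < 8) D i *: I (pb i).
  rewrite /bsum phi_sum; apply: eq_bigr => i _; rewrite phi_scale phi_pe ?fbp //.
  by case: i => [[|[|[|[|[|[|[|[|//]]]]]]]] ?].
rewrite Hb in H2.
have Hb0 : bsum pe D = 0.
  by rewrite /bsum big1 // => i _; rewrite (Hsep H2) ?scale0r.
by rewrite Hb0 subr0 in HD.
Qed.

Definition ue0' : R := (1 + A * B + A ^+ 2 * B ^+ 2) * (1 + C).
Definition ue1' : R := (1 + A ^+ 2 * B ^+ 2) * C.
Definition ue' : R := ue0' + ue1'.

Lemma I_pe0 : I pe0 = ue0'.
Proof.
rewrite /pe0 interp_pmul /interp !big_cons !big_nil /iw !big_cons !big_nil /=.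
by rewrite /ue0' !mulr1 !addr0 !expr2 !mulrA !addrA.
Qed.

Lemma I_pe1 : I pe1 = ue1'.
Proof.
rewrite /pe1 interp_pmul /interp !big_cons !big_nil /iw !big_cons !big_nil /=.
by rewrite /ue1' !mulr1 !addr0 !expr2 !mulrA ?addrA.
Qed.

Lemma I_pue : I pue = ue'.
Proof. by rewrite /pue interp_cat I_pe0 I_pe1. Qed.

Lemma g_vals : [/\ g alpha1 = A ^+ 3 * ue1', g alpha2 = B * ue1',
  g beta1 = A * ue0' & g beta2 = B ^+ 3 * ue0'].
Proof.
rewrite /g /=; split; rewrite interp_pmul -?I_pe0 -?I_pe1;
  rewrite /interp !big_cons !big_nil /iw !big_cons !big_nil /= ?addr0 ?mulr1 //.
Qed.

Theorem main_abs :
  (exists phi : P -> R,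
     (forall x y, EE (phi (x + y)) (phi x + phi y)) /\
     (forall (c : k) x, EE (phi (c *: x)) (c *: phi x)) /\
     (forall x y, EE (phi (x * y)) (phi x * phi y)) /\
     EE (phi 1) ue' /\
     (forall x, EE (phi x) (ue' * phi x * ue')) /\
     EE (phi (eps pe v0)) ue0' /\
     EE (phi (eps pe v1)) ue1' /\
     EE (phi (arr pe alpha1)) (A ^+ 3 * ue1') /\
     EE (phi (arr pe alpha2)) (B * ue1') /\
     EE (phi (arr pe beta1)) (A * ue0') /\
     EE (phi (arr pe beta2)) (B ^+ 3 * ue0') /\
     (forall y, exists x, EE (phi x) (ue' * y * ue')) /\
     (forall x, EE (phi x) 0 <-> I_Q pe x))
  /\ special_biserial pe (I_Q pe).
Proof.
split; last exact: sbiserial HP.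
have [ga1 ga2 gb1 gb2] := g_vals.
exists phi; split; first by move=> x y; rewrite phi_add; apply: E_refl.
split; first by move=> c x; rewrite phi_scale; apply: E_refl.
split; first exact: phi_mul.
split; first by rewrite phi_one I_pue; apply: E_refl.
split; first by move=> x; rewrite -I_pue; apply: phi_ue.
split; first by rewrite /eps phi_pe // -I_pe0; apply: E_refl.
split; first by rewrite /eps phi_pe // -I_pe1; apply: E_refl.
split; first by rewrite phi_arr ga1; apply: E_refl.
split; first by rewrite phi_arr ga2; apply: E_refl.
split; first by rewrite phi_arr gb1; apply: E_refl.
split; first by rewrite phi_arr gb2; apply: E_refl.
split; first by move=> y; rewrite -I_pue; apply: surj.
by move=> x; split; [apply: kernel2 | apply: kernel1].
Qed.
End Main.

End MP5b.
Import MP5b.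

Module MP6a.
Local Open Scope ring_scope.
Set Implicit Arguments.
Unset Strict Implicit.
Unset Printing Implicit Defensive.

Definition bm := seq (seq bool).
Definition nn := 32%N.
Definition bget (M : bm) (i j : nat) : bool := nth false (nth [::] M i) j.
Definition bmk (F : nat -> nat -> bool) : bm := mkseq (fun i => mkseq (fun j => F i j) nn) nn.
Definition bmul (M N : bm) : bm :=
  bmk (fun i j => foldr xorb false (mkseq (fun l => bget M i l && bget N l j) nn)).
Definition badd (M N : bm) : bm := bmk (fun i j => xorb (bget M i j) (bget N i j)).
Definition bid : bm := bmk (fun i j => i == j).
Definition bzero : bm := bmk (fun _ _ => false).

Lemma bget_mk F i j : (i < nn)%N -> (j < nn)%N -> bget (bmk F) i j = F i j.
Proof. by move=> Hi Hj; rewrite /bget /bmk !nth_mkseq. Qed.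

Definition Lan : seq (seq nat) := [:: [:: 0; 0; 0; 0; 0; 0; 0; 0; 0; 0; 0; 0; 0; 0; 0; 0; 0; 0; 0; 0; 0; 0; 0; 0; 0; 0; 0; 0; 0; 0; 0; 0]; [:: 0; 0; 0; 0; 0; 0; 0; 0; 0; 0; 0; 0; 0; 0; 0; 0; 0; 0; 0; 0; 0; 0; 0; 0; 0; 0; 0; 0; 0; 0; 0; 0]; [:: 0; 0; 0; 0; 0; 0; 0; 0; 0; 0; 0; 0; 0; 0; 0; 0; 0; 0; 0; 0; 0; 0; 0; 0; 0; 0; 0; 0; 0; 0; 0; 0]; [:: 0; 0; 0; 0; 0; 0; 0; 0; 0; 0; 0; 0; 0; 0; 0; 0; 0; 0; 0; 0; 0; 0; 0; 0; 0; 0; 0; 0; 0; 0; 0; 0]; [:: 0; 0; 0; 0; 0; 0; 0; 0; 0; 0; 0; 0; 0; 0; 0; 0; 0; 0; 0; 0; 0; 0; 0; 0; 0; 0; 0; 0; 0; 0; 0; 0]; [:: 0; 0; 0; 0; 0; 0; 0; 0; 0; 0; 0; 0; 0; 0; 0; 0; 0; 0; 0; 0; 0; 0; 0; 0; 0; 0; 0; 0; 0; 0; 0; 0]; [:: 0; 0; 0; 0; 0; 0; 0; 0; 0; 0; 0; 0; 0; 0; 0; 0; 0; 0; 0; 0; 0; 0; 0; 0; 0; 0; 0; 0; 0; 0; 0; 0]; [:: 0; 0; 0; 0; 0; 0; 0; 0; 0; 0; 0; 0; 0; 0; 0; 0; 0; 0; 0; 0; 0; 0; 0; 0; 0; 0;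 0; 0; 0; 0; 0; 0]; [:: 1; 0; 0; 0; 0; 0; 0; 0; 0; 0; 0; 0; 0; 0; 0; 0; 0; 0; 0; 0; 0; 0; 0; 0; 0; 0; 0; 0; 0; 0; 0; 0]; [:: 0; 1; 0; 0; 0; 0; 0; 0; 0; 0; 0; 0; 0; 0; 0; 0; 0; 0; 0; 0; 0; 0; 0; 0; 0; 0; 0; 0; 0; 0; 0; 0]; [:: 0; 0; 1; 0; 0; 0; 0; 0; 0; 0; 0; 0; 0; 0; 0; 0; 0; 0; 0; 0; 0; 0; 0; 0; 0; 0; 0; 0; 0; 0; 0; 0]; [:: 0; 0; 0; 1; 0; 0; 0; 0; 0; 0; 0; 0; 0; 0; 0; 0; 0; 0; 0; 0; 0; 0; 0; 0; 0; 0; 0; 0; 0; 0; 0; 0]; [:: 0; 0; 0; 0; 1; 0; 0; 0; 0; 0; 0; 0; 0; 0; 0; 0; 0; 0; 0; 0; 0; 0; 0; 0; 0; 0; 0; 0; 0; 0; 0; 0]; [:: 0; 0; 0; 0; 0; 1; 0; 0; 0; 0; 0; 0; 0; 0; 0; 0; 0; 0; 0; 0; 0; 0; 0; 0; 0; 0; 0; 0; 0; 0; 0; 0]; [:: 0; 0; 0; 0; 0; 0; 1; 0; 0; 0; 0; 0; 0; 0; 0; 0; 0; 0; 0; 0; 0; 0; 0; 0; 0; 0; 0; 0; 0; 0; 0; 0]; [:: 0; 0; 0; 0; 0; 0; 0; 1; 0; 0; 0; 0; 0; 0; 0; 0; 0; 0; 0; 0; 0; 0; 0; 0; 0; 0;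 0; 0; 0; 0; 0; 0]; [:: 0; 0; 0; 0; 0; 0; 0; 0; 1; 0; 0; 0; 0; 0; 0; 0; 0; 0; 0; 0; 0; 0; 0; 0; 0; 0; 0; 0; 0; 0; 0; 0]; [:: 0; 0; 0; 0; 0; 0; 0; 0; 0; 1; 0; 0; 0; 0; 0; 0; 0; 0; 0; 0; 0; 0; 0; 0; 0; 0; 0; 0; 0; 0; 0; 0]; [:: 0; 0; 0; 0; 0; 0; 0; 0; 0; 0; 1; 0; 0; 0; 0; 0; 0; 0; 0; 0; 0; 0; 0; 0; 0; 0; 0; 0; 0; 0; 0; 0]; [:: 0; 0; 0; 0; 0; 0; 0; 0; 0; 0; 0; 1; 0; 0; 0; 0; 0; 0; 0; 0; 0; 0; 0; 0; 0; 0; 0; 0; 0; 0; 0; 0]; [:: 0; 0; 0; 0; 0; 0; 0; 0; 0; 0; 0; 0; 1; 0; 0; 0; 0; 0; 0; 0; 0; 0; 0; 0; 0; 0; 0; 0; 0; 0; 0; 0]; [:: 0; 0; 0; 0; 0; 0; 0; 0; 0; 0; 0; 0; 0; 1; 0; 0; 0; 0; 0; 0; 0; 0; 0; 0; 0; 0; 0; 0; 0; 0; 0; 0]; [:: 0; 0; 0; 0; 0; 0; 0; 0; 0; 0; 0; 0; 0; 0; 1; 0; 0; 0; 0; 0; 0; 0; 0; 0; 0; 0; 0; 0; 0; 0; 0; 0]; [:: 0; 0; 0; 0; 0; 0; 0; 0; 0; 0; 0; 0; 0; 0; 0; 1; 0; 0; 0; 0; 0; 0; 0; 0; 0; 0;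 0; 0; 0; 0; 0; 0]; [:: 0; 0; 0; 0; 0; 0; 0; 0; 0; 0; 0; 0; 0; 0; 0; 0; 1; 0; 0; 0; 0; 0; 0; 0; 0; 0; 0; 0; 0; 0; 0; 0]; [:: 0; 0; 0; 0; 0; 0; 0; 0; 0; 0; 0; 0; 0; 0; 0; 0; 0; 1; 0; 0; 0; 0; 0; 0; 0; 0; 0; 0; 0; 0; 0; 0]; [:: 0; 0; 0; 0; 0; 0; 0; 0; 0; 0; 0; 0; 0; 0; 0; 0; 0; 0; 1; 0; 0; 0; 0; 0; 0; 0; 0; 0; 0; 0; 0; 0]; [:: 0; 0; 0; 0; 0; 0; 0; 0; 0; 0; 0; 0; 0; 0; 0; 0; 0; 0; 0; 1; 0; 0; 0; 0; 0; 0; 0; 0; 0; 0; 0; 0]; [:: 0; 0; 0; 0; 0; 0; 0; 0; 0; 0; 0; 0; 0; 0; 0; 0; 0; 0; 0; 0; 1; 0; 0; 0; 0; 0; 0; 0; 0; 0; 0; 0]; [:: 0; 0; 0; 0; 0; 0; 0; 0; 0; 0; 0; 0; 0; 0; 0; 0; 0; 0; 0; 0; 0; 1; 0; 0; 0; 0; 0; 0; 0; 0; 0; 0]; [:: 0; 0; 0; 0; 0; 0; 0; 0; 0; 0; 0; 0; 0; 0; 0; 0; 0; 0; 0; 0; 0; 0; 1; 0; 0; 0; 0; 0; 0; 0; 0; 0]; [:: 0; 0; 0; 0; 0; 0; 0; 0; 0; 0; 0; 0; 0; 0; 0; 0; 0; 0; 0; 0; 0; 0; 0; 1; 0; 0;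 0; 0; 0; 0; 0; 0]].
Definition Lbn : seq (seq nat) := [:: [:: 0; 0; 0; 0; 0; 0; 0; 0; 0; 0; 0; 0; 0; 0; 0; 0; 0; 0; 0; 0; 0; 0; 0; 0; 0; 0; 0; 0; 0; 0; 0; 0]; [:: 0; 0; 0; 0; 0; 0; 0; 0; 1; 1; 0; 0; 0; 0; 0; 0; 0; 0; 0; 0; 0; 0; 0; 0; 0; 0; 0; 0; 0; 0; 0; 0]; [:: 1; 0; 0; 0; 0; 0; 0; 0; 0; 0; 1; 0; 0; 0; 0; 0; 0; 0; 0; 0; 0; 0; 0; 0; 0; 0; 0; 0; 0; 0; 0; 0]; [:: 0; 1; 0; 0; 0; 0; 0; 0; 0; 0; 1; 0; 0; 0; 0; 0; 0; 0; 0; 0; 0; 0; 0; 0; 0; 0; 0; 0; 0; 0; 0; 0]; [:: 0; 0; 1; 0; 0; 0; 0; 0; 0; 0; 0; 0; 0; 0; 0; 0; 0; 0; 0; 0; 0; 0; 0; 0; 0; 0; 0; 0; 0; 0; 0; 0]; [:: 0; 0; 0; 1; 0; 0; 0; 0; 0; 0; 0; 0; 1; 1; 0; 0; 0; 0; 0; 0; 0; 0; 0; 0; 0; 0; 0; 0; 0; 0; 0; 0]; [:: 0; 0; 0; 0; 1; 0; 0; 0; 0; 0; 0; 0; 0; 0; 1; 0; 0; 0; 0; 0; 0; 0; 0; 0; 0; 0; 0; 0; 0; 0; 0; 0]; [:: 0; 0; 0; 0; 0; 1; 0; 0; 0; 0; 0; 0; 0; 0; 1; 0; 0; 0; 0;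 0; 0; 0; 0; 0; 0; 0; 0; 0; 0; 0; 0; 0]; [:: 0; 0; 0; 0; 0; 0; 0; 0; 0; 0; 0; 0; 0; 0; 0; 0; 1; 0; 0; 0; 0; 0; 0; 0; 0; 0; 0; 0; 0; 0; 0; 0]; [:: 0; 0; 0; 0; 0; 0; 0; 0; 0; 0; 0; 0; 0; 0; 0; 0; 0; 1; 0; 0; 0; 0; 0; 0; 0; 0; 0; 0; 0; 0; 0; 0]; [:: 0; 0; 0; 0; 0; 0; 0; 0; 1; 0; 0; 0; 0; 0; 0; 0; 0; 0; 1; 0; 0; 0; 0; 0; 0; 0; 0; 0; 0; 0; 0; 0]; [:: 0; 0; 0; 0; 0; 0; 0; 0; 0; 1; 0; 0; 0; 0; 0; 0; 0; 0; 0; 1; 0; 0; 0; 0; 0; 0; 0; 0; 0; 0; 0; 0]; [:: 0; 0; 0; 0; 0; 0; 0; 0; 0; 0; 1; 0; 0; 0; 0; 0; 0; 0; 0; 0; 1; 0; 0; 0; 0; 0; 0; 0; 0; 0; 0; 0]; [:: 0; 0; 0; 0; 0; 0; 0; 0; 0; 0; 0; 1; 0; 0; 0; 0; 0; 0; 0; 0; 0; 1; 0; 0; 0; 0; 0; 0; 0; 0; 0; 0]; [:: 0; 0; 0; 0; 0; 0; 0; 0; 0; 0; 0; 0; 1; 0; 0; 0; 0; 0; 0; 0; 0; 0; 1; 0; 0; 0; 0; 0; 0; 0; 0; 0]; [:: 0; 0; 0; 0; 0; 0; 0; 0; 0; 0; 0; 0; 0; 1; 0; 0; 0; 0; 0;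 0; 0; 0; 0; 1; 0; 0; 0; 0; 0; 0; 0; 0]; [:: 0; 0; 0; 0; 0; 0; 0; 0; 0; 0; 0; 0; 0; 0; 0; 0; 0; 0; 0; 0; 0; 0; 0; 0; 1; 0; 0; 0; 0; 0; 0; 0]; [:: 0; 0; 0; 0; 0; 0; 0; 0; 0; 0; 0; 0; 0; 0; 0; 0; 0; 0; 0; 0; 0; 0; 0; 0; 1; 0; 0; 0; 0; 0; 0; 0]; [:: 0; 0; 0; 0; 0; 0; 0; 0; 0; 0; 0; 0; 0; 0; 0; 0; 1; 0; 0; 0; 0; 0; 0; 0; 0; 0; 0; 0; 0; 0; 0; 0]; [:: 0; 0; 0; 0; 0; 0; 0; 0; 0; 0; 0; 0; 0; 0; 0; 0; 0; 1; 0; 0; 0; 0; 0; 0; 0; 0; 1; 1; 0; 0; 0; 0]; [:: 0; 0; 0; 0; 0; 0; 0; 0; 0; 0; 0; 0; 0; 0; 0; 0; 0; 0; 1; 0; 0; 0; 0; 0; 0; 0; 0; 0; 1; 0; 0; 0]; [:: 0; 0; 0; 0; 0; 0; 0; 0; 0; 0; 0; 0; 0; 0; 0; 0; 0; 0; 0; 1; 0; 0; 0; 0; 0; 0; 0; 0; 1; 0; 0; 0]; [:: 0; 0; 0; 0; 0; 0; 0; 0; 0; 0; 0; 0; 0; 0; 0; 0; 0; 0; 0; 0; 1; 0; 0; 0; 0; 0; 0; 0; 0; 0; 0; 0]; [:: 0; 0; 0; 0; 0; 0; 0; 0; 0; 0; 0; 0; 0; 0; 0; 0; 0; 0; 0;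 0; 0; 1; 0; 0; 0; 0; 0; 0; 0; 0; 1; 1]; [:: 0; 0; 0; 0; 0; 0; 0; 0; 0; 0; 0; 0; 0; 0; 0; 0; 0; 0; 0; 0; 0; 0; 0; 0; 0; 0; 0; 0; 0; 0; 0; 0]; [:: 0; 0; 0; 0; 0; 0; 0; 0; 0; 0; 0; 0; 0; 0; 0; 0; 0; 0; 0; 0; 0; 0; 0; 0; 0; 0; 0; 0; 0; 0; 0; 0]; [:: 0; 0; 0; 0; 0; 0; 0; 0; 0; 0; 0; 0; 0; 0; 0; 0; 0; 0; 0; 0; 0; 0; 0; 0; 1; 0; 0; 0; 0; 0; 0; 0]; [:: 0; 0; 0; 0; 0; 0; 0; 0; 0; 0; 0; 0; 0; 0; 0; 0; 0; 0; 0; 0; 0; 0; 0; 0; 0; 1; 0; 0; 0; 0; 0; 0]; [:: 0; 0; 0; 0; 0; 0; 0; 0; 0; 0; 0; 0; 0; 0; 0; 0; 0; 0; 0; 0; 0; 0; 0; 0; 0; 0; 1; 0; 0; 0; 0; 0]; [:: 0; 0; 0; 0; 0; 0; 0; 0; 0; 0; 0; 0; 0; 0; 0; 0; 0; 0; 0; 0; 0; 0; 0; 0; 0; 0; 0; 1; 0; 0; 0; 0]; [:: 0; 0; 0; 0; 0; 0; 0; 0; 0; 0; 0; 0; 0; 0; 0; 0; 0; 0; 0; 0; 0; 0; 0; 0; 0; 0; 0; 0; 1; 0; 0; 0]; [:: 0; 0; 0; 0; 0; 0; 0; 0; 0; 0; 0; 0; 0; 0; 0; 0; 0; 0; 0;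 0; 0; 0; 0; 0; 0; 0; 0; 0; 0; 1; 0; 0]].
Definition Lcn : seq (seq nat) := [:: [:: 0; 0; 0; 0; 0; 0; 0; 0; 0; 0; 0; 0; 0; 0; 0; 0; 0; 0; 0; 0; 0; 0; 0; 0; 0; 0; 0; 0; 0; 0; 0; 0]; [:: 1; 1; 0; 0; 0; 0; 0; 0; 0; 0; 0; 0; 0; 0; 0; 0; 0; 0; 0; 0; 0; 0; 0; 0; 0; 0; 0; 0; 0; 0; 0; 0]; [:: 0; 0; 1; 0; 0; 0; 0; 0; 0; 0; 0; 0; 0; 0; 0; 0; 0; 0; 0; 0; 0; 0; 0; 0; 0; 0; 0; 0; 0; 0; 0; 0]; [:: 0; 0; 1; 0; 0; 0; 0; 0; 0; 0; 0; 0; 0; 0; 0; 0; 0; 0; 0; 0; 0; 0; 0; 0; 0; 0; 0; 0; 0; 0; 0; 0]; [:: 0; 0; 0; 0; 0; 0; 0; 0; 0; 0; 0; 0; 0; 0; 0; 0; 0; 0; 0; 0; 0; 0; 0; 0; 0; 0; 0; 0; 0; 0; 0; 0]; [:: 0; 0; 0; 0; 1; 1; 0; 0; 0; 0; 0; 0; 0; 0; 0; 0; 0; 0; 0; 0; 0; 0; 0; 0; 0; 0; 0; 0; 0; 0; 0; 0]; [:: 0; 0; 0; 0; 0; 0; 1; 0; 0; 0; 0; 0; 0; 0; 0; 0; 0; 0; 0; 0; 0; 0; 0; 0; 0; 0; 0; 0; 0; 0; 0; 0]; [:: 0; 0; 0; 0; 0; 0; 1; 0; 0; 0; 0; 0;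 0; 0; 0; 0; 0; 0; 0; 0; 0; 0; 0; 0; 0; 0; 0; 0; 0; 0; 0; 0]; [:: 0; 0; 0; 0; 0; 0; 0; 0; 1; 0; 0; 0; 0; 0; 0; 0; 0; 0; 0; 0; 0; 0; 0; 0; 0; 0; 0; 0; 0; 0; 0; 0]; [:: 0; 0; 0; 0; 0; 0; 0; 0; 1; 0; 0; 0; 0; 0; 0; 0; 0; 0; 0; 0; 0; 0; 0; 0; 0; 0; 0; 0; 0; 0; 0; 0]; [:: 0; 0; 0; 0; 0; 0; 0; 0; 0; 0; 0; 0; 0; 0; 0; 0; 0; 0; 0; 0; 0; 0; 0; 0; 0; 0; 0; 0; 0; 0; 0; 0]; [:: 0; 0; 0; 0; 0; 0; 0; 0; 0; 0; 1; 1; 0; 0; 0; 0; 0; 0; 0; 0; 0; 0; 0; 0; 0; 0; 0; 0; 0; 0; 0; 0]; [:: 0; 0; 0; 0; 0; 0; 0; 0; 0; 0; 0; 0; 1; 0; 0; 0; 0; 0; 0; 0; 0; 0; 0; 0; 0; 0; 0; 0; 0; 0; 0; 0]; [:: 0; 0; 0; 0; 0; 0; 0; 0; 0; 0; 0; 0; 1; 0; 0; 0; 0; 0; 0; 0; 0; 0; 0; 0; 0; 0; 0; 0; 0; 0; 0; 0]; [:: 0; 0; 0; 0; 0; 0; 0; 0; 0; 0; 0; 0; 0; 0; 0; 0; 0; 0; 0; 0; 0; 0; 0; 0; 0; 0; 0; 0; 0; 0; 0; 0]; [:: 0; 0; 0; 0; 0; 0; 0; 0; 0; 0; 0; 0;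 0; 0; 1; 1; 0; 0; 0; 0; 0; 0; 0; 0; 0; 0; 0; 0; 0; 0; 0; 0]; [:: 0; 0; 0; 0; 0; 0; 0; 0; 0; 0; 0; 0; 0; 0; 0; 0; 0; 0; 0; 0; 0; 0; 0; 0; 0; 0; 0; 0; 0; 0; 0; 0]; [:: 0; 0; 0; 0; 0; 0; 0; 0; 0; 0; 0; 0; 0; 0; 0; 0; 1; 1; 0; 0; 0; 0; 0; 0; 0; 0; 0; 0; 0; 0; 0; 0]; [:: 0; 0; 0; 0; 0; 0; 0; 0; 0; 0; 0; 0; 0; 0; 0; 0; 0; 0; 1; 0; 0; 0; 0; 0; 0; 0; 0; 0; 0; 0; 0; 0]; [:: 0; 0; 0; 0; 0; 0; 0; 0; 0; 0; 0; 0; 0; 0; 0; 0; 0; 0; 1; 0; 0; 0; 0; 0; 0; 0; 0; 0; 0; 0; 0; 0]; [:: 0; 0; 0; 0; 0; 0; 0; 0; 0; 0; 0; 0; 0; 0; 0; 0; 0; 0; 0; 0; 0; 0; 0; 0; 0; 0; 0; 0; 0; 0; 0; 0]; [:: 0; 0; 0; 0; 0; 0; 0; 0; 0; 0; 0; 0; 0; 0; 0; 0; 0; 0; 0; 0; 1; 1; 0; 0; 0; 0; 0; 0; 0; 0; 0; 0]; [:: 0; 0; 0; 0; 0; 0; 0; 0; 0; 0; 0; 0; 0; 0; 0; 0; 0; 0; 0; 0; 0; 0; 1; 0; 0; 0; 0; 0; 0; 0; 0; 0]; [:: 0; 0; 0; 0; 0; 0; 0; 0; 0; 0; 0; 0;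 0; 0; 0; 0; 0; 0; 0; 0; 0; 0; 1; 0; 0; 0; 0; 0; 0; 0; 0; 0]; [:: 0; 0; 0; 0; 0; 0; 0; 0; 0; 0; 0; 0; 0; 0; 0; 0; 0; 0; 0; 0; 0; 0; 0; 0; 1; 0; 0; 0; 0; 0; 0; 0]; [:: 0; 0; 0; 0; 0; 0; 0; 0; 0; 0; 0; 0; 0; 0; 0; 0; 0; 0; 0; 0; 0; 0; 0; 0; 1; 0; 0; 0; 0; 0; 0; 0]; [:: 0; 0; 0; 0; 0; 0; 0; 0; 0; 0; 0; 0; 0; 0; 0; 0; 0; 0; 0; 0; 0; 0; 0; 0; 0; 0; 0; 0; 0; 0; 0; 0]; [:: 0; 0; 0; 0; 0; 0; 0; 0; 0; 0; 0; 0; 0; 0; 0; 0; 0; 0; 0; 0; 0; 0; 0; 0; 0; 0; 1; 1; 0; 0; 0; 0]; [:: 0; 0; 0; 0; 0; 0; 0; 0; 0; 0; 0; 0; 0; 0; 0; 0; 0; 0; 0; 0; 0; 0; 0; 0; 0; 0; 0; 0; 1; 0; 0; 0]; [:: 0; 0; 0; 0; 0; 0; 0; 0; 0; 0; 0; 0; 0; 0; 0; 0; 0; 0; 0; 0; 0; 0; 0; 0; 0; 0; 0; 0; 1; 0; 0; 0]; [:: 0; 0; 0; 0; 0; 0; 0; 0; 0; 0; 0; 0; 0; 0; 0; 0; 0; 0; 0; 0; 0; 0; 0; 0; 0; 0; 0; 0; 0; 0; 0; 0]; [:: 0; 0; 0; 0; 0; 0; 0; 0; 0; 0; 0; 0;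 0; 0; 0; 0; 0; 0; 0; 0; 0; 0; 0; 0; 0; 0; 0; 0; 0; 0; 1; 1]].
Definition of_nat (M : seq (seq nat)) : bm := bmk (fun i j => nth 0 (nth [::] M i) j == 1)%N.
Definition La := of_nat Lan.
Definition Lb := of_nat Lbn.
Definition Lc := of_nat Lcn.
Definition Lg (n : nat) : bm := match n with 0 => La | 1 => Lb | _ => Lc end.
Definition bprod (w : seq nat) : bm := foldr (fun l M => bmul (Lg l) M) bid w.
Definition bev (p : wpoly) : bm := foldr (fun w M => badd (bprod w) M) bzero p.

Definition rchk := [&& badd (badd (bmul La Lb) (bmul Lb La)) Lc == bzero,
  badd (badd (bmul La Lc) (bmul Lc La)) La == bzero,
  badd (badd (bmul Lb Lc) (bmul Lc Lb)) Lb == bzero,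
  bmul La (bmul La (bmul La La)) == bzero,
  bmul Lb (bmul Lb (bmul Lb Lb)) == bzero &
  badd (bmul Lc Lc) Lc == bzero].
Definition rpos (j : nat) : nat := nth 0 [:: 0; 1; 25; 3; 8; 6; 30; 11]%N j.
Definition cpos (j : nat) : nat := nth 0 [:: 0; 1; 0; 0; 0; 0; 0; 1]%N j.
Definition schk := all (fun i => let M := bev (pb i) in
   all (fun j => bget M (rpos j) (cpos j) == (i == j)) (iota 0 8)) (iota 0 8).
Lemma rchk_ok : rchk. Proof. vm_compute. reflexivity. Qed.
Lemma schk_ok : schk. Proof. vm_compute. reflexivity. Qed.

End MP6a.
Import MP6a.

Module MP6b.
Local Open Scope ring_scope.
Set Implicit Arguments.
Unset Strict Implicit.
Unset Printing Implicit Defensive.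

Section Mat.
Variable k : fieldType.
Hypothesis char2 : (2%:R : k) = 0.

Definition toK (M : bm) : 'M[k]_nn := \matrix_(i, j) (bget M i j)%:R.

Lemma natr_xor (a b : bool) : ((xorb a b)%:R : k) = a%:R + b%:R.
Proof. by case: a; case: b; rewrite /= ?addr0 ?add0r // -mulr2n. Qed.

Lemma foldr_xor (s : seq bool) : ((foldr xorb false s)%:R : k) = \sum_(b <- s) b%:R.
Proof. by elim: s => [|b s IH]; rewrite ?big_nil ?big_cons //= natr_xor IH. Qed.

Lemma toK_mul M N : toK (bmul M N) = toK M * toK N.
Proof.
apply/matrixP => i j; rewrite -mulmxE !mxE /bmul bget_mk // foldr_xor /mkseq big_map.
have -> : iota 0 nn = index_iota 0 nn by [].
rewrite big_mkord.
apply: eq_bigr => l _; rewrite !mxE.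
by case: (bget M i l); case: (bget N l j); rewrite /= ?mulr0 ?mulr1 ?mul0r.
Qed.

Lemma toK_add M N : toK (badd M N) = toK M + toK N.
Proof. by apply/matrixP => i j; rewrite !mxE /badd bget_mk // natr_xor. Qed.

Lemma toK_id : toK bid = 1.
Proof. by apply/matrixP => i j; rewrite !mxE /bid bget_mk //. Qed.

Lemma toK_zero : toK bzero = 0.
Proof. by apply/matrixP => i j; rewrite !mxE /bzero bget_mk. Qed.

Lemma oppK (M : 'M[k]_nn) : - M = M.
Proof.
apply/matrixP => i j; rewrite !mxE; apply/eqP; rewrite eq_sym -subr_eq0 opprK.
by rewrite -mulr2n -mulr_natl char2 mul0r.
Qed.
End Mat.

Section Abs.
Variable k : fieldType.
Hypothesis char2 : (2%:R : k) = 0.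

Lemma rel_abs (R : nzRingType) (r : R -> 'M[k]_nn) (A B C : R)
  (rD : forall x y, r (x + y) = r x + r y) (rN : forall x, r (- x) = - r x)
  (rM : forall x y, r (x * y) = r x * r y)
  (HA : r A = toK k La) (HB : r B = toK k Lb) (HC : r C = toK k Lc) s :
  relR A B C s -> r s = 0.
Proof.
have Hr := rchk_ok; move: Hr => /and5P[/eqP h1 /eqP h2 /eqP h3 /eqP h4 /andP[/eqP h5 /eqP h6]].
case=> [->|[->|[->|[->|[->|->]]]]]; rewrite ?expr2 ?exprS ?expr0 ?mulr1 ?rD ?rN ?rM ?HA ?HB ?HC
  ?(oppK char2) -?(toK_mul char2) -?(toK_add char2).
- by rewrite h1 toK_zero.
- by rewrite h2 toK_zero.
- by rewrite h3 toK_zero.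
- by rewrite h4 toK_zero.
- by rewrite h5 toK_zero.
- by rewrite h6 toK_zero.
Qed.
End Abs.

Section Abs2.
Variable k : fieldType.
Hypothesis char2 : (2%:R : k) = 0.
Variables (R : lalgType k) (r : R -> 'M[k]_nn) (A B C : R).
Hypotheses (rD : forall x y, r (x + y) = r x + r y) (rN : forall x, r (- x) = - r x)
  (rM : forall x y, r (x * y) = r x * r y) (r1 : r 1 = 1)
  (rZ : forall (c : k) x, r (c *: x) = c%:M * r x)
  (HA : r A = toK k La) (HB : r B = toK k Lb) (HC : r C = toK k Lc).

Lemma r0 : r 0 = 0.
Proof. by have := rN 0; rewrite oppr0 => /eqP; rewrite -addr_eq0 -rD addr0 => /eqP. Qed.

Lemma ideal_kill x : ideal_gen (relR A B C) x -> r x = 0.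
Proof.
move=> [l [Hl ->]]; elim: l Hl => [|t l IH] Hl; first by rewrite big_nil r0.
rewrite big_cons rD IH; last by move=> t' Ht'; apply: Hl; rewrite inE Ht' orbT.
rewrite !rM (rel_abs char2 rD rN rM HA HB HC (Hl t _)) ?inE ?eqxx //.
by rewrite mulr0 mul0r addr0.
Qed.

Lemma r_gl l : r (gl A B C l) = toK k (Lg l).
Proof. by case: l => [|[|l]]. Qed.

Lemma r_iw w : r (iw A B C w) = toK k (bprod w).
Proof.
elim: w => [|l w IH]; first by rewrite iw_nil r1 toK_id.
by rewrite iw_cons rM r_gl IH /= toK_mul.
Qed.

Lemma r_interp p : r (interp A B C p) = toK k (bev p).
Proof.
elim: p => [|w p IH]; first by rewrite interp_nil r0 toK_zero.
by rewrite interp_cons rD r_iw IH /= toK_add.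
Qed.

Lemma r_sum (I : Type) (s : seq I) (F : I -> R) : r (\sum_(i <- s) F i) = \sum_(i <- s) r (F i).
Proof.
elim: s => [|i s IH]; first by rewrite !big_nil r0.
by rewrite !big_cons rD IH.
Qed.

Lemma schk' i j : (i < 8)%N -> (j < 8)%N -> bget (bev (pb i)) (rpos j) (cpos j) = (i == j).
Proof.
move=> Hi Hj.
have allI : forall (Pr : nat -> bool) n m, all Pr (iota 0 n) -> (m < n)%N -> Pr m.
  by move=> Pr n m /allP H Hm; apply: H; rewrite mem_iota add0n.
exact: (eqP (allI _ _ _ (allI _ _ _ schk_ok Hi) Hj)).
Qed.

Lemma sep_abs (D : nat -> k) :
  E (relR A B C) (\sum_(i < 8) D i *: interp A B C (pb i)) 0 -> forall i, (i < 8)%N -> D i = 0.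
Proof.
move=> /E_ideal /ideal_kill H j Hj.
rewrite r_sum in H.
have [Hrp Hcp] : (rpos j < nn)%N /\ (cpos j < nn)%N.
  by clear H; case: j Hj => [|[|[|[|[|[|[|[|//]]]]]]]].
have := congr1 (fun M : 'M[k]_nn => M (Ordinal Hrp) (Ordinal Hcp)) H.
rewrite summxE mxE /= => H2.
rewrite -H2 (bigD1 (Ordinal Hj)) //= big1 ?addr0.
  by rewrite rZ r_interp -mulmxE mul_scalar_mx !mxE /= schk' // eqxx mulr1.
move=> i Hi; rewrite rZ r_interp -mulmxE mul_scalar_mx !mxE /= schk' //.
have -> : (i == j :> nat) = false by apply/negbTE; apply: contra Hi => /eqP Hij; apply/eqP/val_inj.
by rewrite mulr0.
Qed.
End Abs2.

End MP6b.
Import MP6b.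

Module MP6c.
Local Open Scope ring_scope.
Import finmap.
Set Implicit Arguments.
Unset Strict Implicit.
Unset Printing Implicit Defensive.

Lemma malg_scaleAr (K : monomType) (F : fieldType) (c : F) (x y : {malg F[K]}) :
  x * (c *: y) = c *: (x * y).
Proof.
have Hx : x * c%:MP = c *: x.
  rewrite malgM_def fgmulgU malgZ_def /fgscale; apply: eq_bigr => m _.
  by rewrite mulrC mulm1.
by rewrite -mul_malgC mulrA Hx -scalerAl.
Qed.

Lemma malg_monom (F : fieldType) (s : seq 'I_3) :
  << FMonom s >> = \prod_(i <- s) (<< fmu i >> : {malg F[{fmonom 'I_3}]}).
Proof.
elim: s => [|i s IH]; first by rewrite big_nil -fmoneE.
rewrite big_cons -IH malgM_def fgmulUU mulr1; congr (<< _ >>).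
by apply: val_inj; rewrite /= fmM fmU.
Qed.

Lemma malg_span (F : fieldType) (y : {malg F[{fmonom 'I_3}]}) :
  y = \sum_(m <- msupp y) y@_m *: \prod_(i <- m) << fmu i >>.
Proof.
rewrite {1}[y]monalgE; apply: eq_bigr => m _.
rewrite -malg_monom fmK; apply/malgP => m'.
by rewrite mcoeffZ !mcoeffU mulrnAr mulr1.
Qed.

Section Concrete.
Variable k : fieldType.
Hypothesis char2 : (2%:R : k) = 0.
Local Notation F := (freealg k).

Lemma char2F : (2%:R : F) = 0.
Proof. by rewrite -mpolyC_nat char2 malgC0E. Qed.

Lemma gen_gl (i : 'I_3) : gen k i = gl (ga k) (gb k) (gc k) i.
Proof.
case: i => [[|[|[|//]]] Hi] /=; rewrite /ga /gb /gc; congr gen; exact: val_inj.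
Qed.

Lemma Fspan (y : F) : exists l : seq (k * seq nat), y = \sum_(t <- l) t.1 *: iw (ga k) (gb k) (gc k) t.2.
Proof.
exists [seq (y@_m, map val (fmonom_val m)) | m <- msupp y].
rewrite big_map {1}[y]malg_span; apply: eq_bigr => m _ /=.
by rewrite /iw big_map; congr (_ *: _); apply: eq_bigr => i _; rewrite -gen_gl.
Qed.

Definition hmon (m : fmonom 'I_3) : 'M[k]_nn := \prod_(i <- m) toK k (Lg i).
Lemma hmon_morph : mmorphism hmon.
Proof. by split; [move=> x y; rewrite /hmon fmM big_cat | rewrite /hmon fm1 big_nil]. Qed.
HB.instance Definition _ := isMultiplicative.Build (fmonom 'I_3) 'M[k]_nn hmon hmon_morph.

Definition rho (x : F) : 'M[k]_nn := mmap (@scalar_mx k nn) hmon x.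

Lemma rhoD x y : rho (x + y) = rho x + rho y.
Proof. exact: mmapD. Qed.
Lemma rhoN x : rho (- x) = - rho x.
Proof. exact: mmapN. Qed.
Lemma rhoM x y : rho (x * y) = rho x * rho y.
Proof.
have H := @commr_mmap_is_multiplicative _ _ _ (@scalar_mx k nn) hmon.
apply: (H _).1 => g m m'; rewrite /GRing.comm -!mulmxE scalar_mxC //.
Qed.
Lemma rho1 : rho 1 = 1.
Proof. exact: mmap1. Qed.
Lemma rhoZ (c : k) x : rho (c *: x) = c%:M * rho x.
Proof. exact: mmapZ. Qed.
Lemma rho_gen i : rho (gen k i) = toK k (Lg i).
Proof. by rewrite /rho /gen mmapU /hmon fmU big_seq1 mul1r. Qed.

Lemma Fsep (D : nat -> k) :
  E (relR (ga k) (gb k) (gc k)) (\sum_(i < 8) D i *: interp (ga k) (gb k) (gc k) (pb i)) 0 ->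
  forall i, (i < 8)%N -> D i = 0.
Proof.
apply: (sep_abs char2 rhoD rhoN rhoM rho1 rhoZ); exact: rho_gen.
Qed.
End Concrete.

End MP6c.
Import MP6c.

Unset Implicit Arguments.
Set Strict Implicit.
Local Open Scope ring_scope.

Theorem theorem3p16 (k : closedFieldType) (char2 : (2 \in [pchar k])%N)
    (P : algType k) (pe : qpath -> P) (HP : is_path_algebra pe) :
  (exists phi : P -> freealg k,
     (* phi is an algebra map kQ -> u(m)^b = e u(m) e (unit e) *)
     (forall x y, um_eq (phi (x + y)) (phi x + phi y)) /\
     (forall (c : k) x, um_eq (phi (c *: x)) (c *: phi x)) /\
     (forall x y, um_eq (phi (x * y)) (phi x * phi y)) /\
     um_eq (phi 1) (ue k) /\
     (forall x, um_eq (phi x) (ue k * phi x * ue k)) /\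
     (* prescribed values on generators *)
     um_eq (phi (eps pe v0)) (ue0 k) /\
     um_eq (phi (eps pe v1)) (ue1 k) /\
     um_eq (phi (arr pe alpha1)) (ga k ^+ 3 * ue1 k) /\
     um_eq (phi (arr pe alpha2)) (gb k * ue1 k) /\
     um_eq (phi (arr pe beta1)) (ga k * ue0 k) /\
     um_eq (phi (arr pe beta2)) (gb k ^+ 3 * ue0 k) /\
     (* surjective onto e u(m) e *)
     (forall y, exists x, um_eq (phi x) (ue k * y * ue k)) /\
     (* kernel = I *)
     (forall x, um_eq (phi x) 0 <-> I_Q pe x))
  /\ special_biserial pe (I_Q pe).
Proof.
have c2 : (2%:R : k) = 0 := pcharf0 char2.
exact: (@main_abs k (freealg k) (ga k) (gb k) (gc k) (char2F c2) (@malg_scaleAr _ k) P pe HP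
  (@Fspan k) (Fsep c2)).
Qed.
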